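(* Let $\lambda\le\kappa$ be infinite cardinals and let $\mathcal{K}$ be an abstract elementary class with $\mathrm{LS}(\mathcal{K})\le\kappa$ such that $\mathcal{K}_\kappa$ has amalgamation. Let $\mathcal{T}\subseteq{}^{<\lambda^+}(\lambda^+)$, ordered by $\trianglelefteq$ (being an initial segment), be a tree each of whose levels has size $\le\lambda^+$, and for $\eta\in\mathcal{T}$ let $M_\eta\in\mathcal{K}$ with $\|M_\eta\|=\kappa$, such that $\eta\trianglelefteq\nu$ implies $M_\eta\le_{\mathcal K}M_\nu$. Then there are $M^\ast\in\mathcal{K}$ and maps $\langle g_\eta:\eta\in\mathcal{T}\rangle$ such that (A) each $g_\eta$ is a $\le_{\mathcal K}$-embedding of $M_\eta$ into $M^\ast$; (B) $\eta\trianglelefteq\nu$ implies $g_\eta\subseteq g_\nu$; (C) $\|M^\ast\|\le\kappa\cdot\lambda^+$.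
   Context: An abstract elementary class is a class $\mathcal K$ of models of a fixed vocabulary $\tau$ with a binary relation $\le_{\mathcal K}$ such that: $\mathcal K$ is closed under isomorphism and $\le_{\mathcal K}$ is preserved by isomorphisms; $M\le_{\mathcal K}N$ implies $M$ is a submodel of $N$; $\le_{\mathcal K}$ is a partial order; the union of a $\le_{\mathcal K}$-increasing continuous chain of members of $\mathcal K$ is in $\mathcal K$ and is the $\le_{\mathcal K}$-least upper bound of the chain; if $M_0,M_1\le_{\mathcal K}N$ and $M_0$ is a submodel of $M_1$ then $M_0\le_{\mathcal K}M_1$; and there is a cardinal $\kappa$ such that for every $M\in\mathcal K$ and $A\subseteq|M|$ there is $N\le_{\mathcal K}M$ with $A\subseteq|N|$ and $|N|\le\kappa\cdot(|A|+1)$; the least such $\kappa$ is $\mathrm{LS}(\mathcal K)$. $\mathcal K_\kappa$ is the class of members of $\mathcal K$ of cardinality $\kappa$. A $\le_{\mathcal K}$-embedding of $M$ into $N$ is an isomorphism of $M$ onto some $M'\le_{\mathcal K}N$. $\mathcal K_\kappa$ has amalgamation if for all $M_0,M_1,M_2\in\mathcal K_\kappa$ and $\le_{\mathcal K}$-embeddings $g_l:M_0\to M_l$ ($l=1,2$) there are $N\in\mathcal K_\kappa$ and $\le_{\mathcal K}$-embeddings $f_l:M_l\to N$ with $f_1\circ g_1=f_2\circ g_2$. *)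

(* Defs.v *)
(* Abstract elementary classes, presented with carriers as
   Rocq types and the strong-substructure relation given on embeddings. *)
From Stdlib Require Import PeanoNat.




Definition card_le (A B : Type) : Prop :=
  exists f : A -> B, forall x y, f x = f y -> x = y.
Definition card_eq (A B : Type) : Prop :=
  exists f : A -> B, (forall x y, f x = f y -> x = y) /\ (forall b, exists a, f a = b).
Definition infinite_type (A : Type) : Prop := card_le nat A.

(* strict well-orders (= ordinals, up to isomorphism) *)
Definition well_order {I : Type} (lt : I -> I -> Prop) : Prop :=
  well_founded lt /\
  (forall i j k, lt i j -> lt j k -> lt i k) /\
  (forall i j, lt i j \/ i = j \/ lt j i).

(* (W, lt) is (an isomorphic copy of) the ordinal lambda^+, lambda = |Lam|:
   a well-order all of whose proper initial segments have size <= lambda,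
   while W itself has size > lambda. *)
Definition is_succ_card_ordinal (Lam : Type) {W : Type} (lt : W -> W -> Prop) : Prop :=
  well_order lt /\
  (forall a : W, card_le {b : W | lt b a} Lam) /\
  ~ card_le W Lam.

Record vocab := Vocab {
  fsym : Type; farity : fsym -> nat;
  rsym : Type; rarity : rsym -> nat }.

Record structure (tau : vocab) := Structure {
  car :> Type;
  fint : forall F : fsym tau, ({k : nat | k < farity tau F} -> car) -> car;
  rint : forall R : rsym tau, ({k : nat | k < rarity tau R} -> car) -> Prop }.

Arguments car {tau} s.
Arguments fint {tau} s F xs.
Arguments rint {tau} s R xs.

Definition is_embedding {tau} (M N : structure tau) (f : car M -> car N) : Prop :=
  (forall x y, f x = f y -> x = y) /\
  (forall F xs, f (fint M F xs) = fint N F (fun k => f (xs k))) /\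
  (forall R xs, rint M R xs <-> rint N R (fun k => f (xs k))).

Definition is_iso {tau} (M N : structure tau) (f : car M -> car N) : Prop :=
  is_embedding M N f /\ (forall y, exists x, f x = y).

(* the maps fm i j (for i <= j) of a chain are given as a family *)
Definition union_cocone {tau} {I : Type} (lt : I -> I -> Prop) (S : I -> Prop)
  (Mi : I -> structure tau) (fm : forall i j, car (Mi i) -> car (Mi j))
  (U : structure tau) (u : forall i, car (Mi i) -> car U) : Prop :=
  (forall i, S i -> is_embedding (Mi i) U (u i)) /\
  (forall i j, S i -> S j -> lt i j -> forall x, u j (fm i j x) = u i x) /\
  (forall y, exists i, S i /\ exists x, u i x = y).

Definition is_limit {I : Type} (lt : I -> I -> Prop) (j : I) : Prop :=
  (exists i, lt i j) /\ (forall i, lt i j -> exists k, lt i k /\ lt k j).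

Definition LS_property {tau} (inK : structure tau -> Prop)
  (leK : forall M N : structure tau, (car M -> car N) -> Prop) (Kap : Type) : Prop :=
  forall M, inK M -> forall A : car M -> Prop,
    exists (N : structure tau) (f : car N -> car M),
      leK N M f /\ (forall a, A a -> exists n, f n = a) /\
      card_le (car N) (Kap * option {a : car M | A a}).

(* leK M N f  means: f is a <=_K-embedding of M into N
   (an isomorphism of M onto some M' <=_K N). *)
Record AEC (tau : vocab) := MkAEC {
  inK : structure tau -> Prop;
  leK : forall M N : structure tau, (car M -> car N) -> Prop;
  leK_inK : forall M N f, leK M N f -> inK M /\ inK N;
  leK_emb : forall M N f, leK M N f -> is_embedding M N f;
  inK_iso : forall M N f, inK M -> is_iso M N f -> inK N;
  leK_iso : forall M N f, inK M -> is_iso M N f -> leK M N f;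
  leK_comp : forall M N P f g, leK M N f -> leK N P g -> leK M P (fun x => g (f x));
  leK_coh : forall M0 M1 N f0 f1 (h : car M0 -> car M1),
      leK M0 N f0 -> leK M1 N f1 -> (forall x, f1 (h x) = f0 x) -> leK M0 M1 h;
  leK_chain : forall (I : Type) (lt : I -> I -> Prop), well_order lt -> inhabited I ->
      forall (Mi : I -> structure tau) (fm : forall i j, car (Mi i) -> car (Mi j)),
      (forall i j, lt i j -> leK (Mi i) (Mi j) (fm i j)) ->
      (forall i, inK (Mi i)) ->
      (forall i j k, lt i j -> lt j k -> forall x, fm j k (fm i j x) = fm i k x) ->
      (forall j, is_limit lt j ->
         union_cocone lt (fun i => lt i j) Mi fm (Mi j) (fun i => fm i j)) ->
      forall (U : structure tau) (u : forall i, car (Mi i) -> car U),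
      union_cocone lt (fun _ => True) Mi fm U u ->
      inK U /\ (forall i, leK (Mi i) U (u i)) /\
      (forall (N : structure tau) (g : forall i, car (Mi i) -> car N),
         (forall i, leK (Mi i) N (g i)) ->
         (forall i j, lt i j -> forall x, g j (fm i j x) = g i x) ->
         forall h : car U -> car N, (forall i x, h (u i x) = g i x) -> leK U N h);
  LS_exists : exists Theta : Type, LS_property inK leK Theta }.

Arguments inK {tau} a _.
Arguments leK {tau} a M N _.

Definition K_card {tau} (K : AEC tau) (Kap : Type) (M : structure tau) : Prop :=
  inK K M /\ card_eq (car M) Kap.

Definition amalgamation {tau} (K : AEC tau) (Kap : Type) : Prop :=
  forall (M0 M1 M2 : structure tau) (g1 : car M0 -> car M1) (g2 : car M0 -> car M2),
    K_card K Kap M0 -> K_card K Kap M1 -> K_card K Kap M2 ->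
    leK K M0 M1 g1 -> leK K M0 M2 g2 ->
    exists (N : structure tau) (f1 : car M1 -> car N) (f2 : car M2 -> car N),
      K_card K Kap N /\ leK K M1 N f1 /\ leK K M2 N f2 /\
      (forall x, f1 (g1 x) = f2 (g2 x)).

Record wseq {W : Type} (lt : W -> W -> Prop) := WSeq {
  len : W;
  ent : forall b : W, lt b len -> W }.
Arguments len {W lt} _.
Arguments ent {W lt} _ b _.

Definition initseg {W} {lt : W -> W -> Prop} (eta nu : wseq lt) : Prop :=
  (len eta = len nu \/ lt (len eta) (len nu)) /\
  (forall b (p : lt b (len eta)) (q : lt b (len nu)), ent eta b p = ent nu b q).

Definition is_subtree {W} {lt : W -> W -> Prop} (T : wseq lt -> Prop) : Prop :=
  forall eta nu, T nu -> initseg eta nu -> T eta.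

Definition levels_le {W} {lt : W -> W -> Prop} (T : wseq lt -> Prop) : Prop :=
  forall a : W, card_le {eta : wseq lt | T eta /\ len eta = a} W.

(* Main.v *)
Require Import Defs.
From Stdlib Require Import Classical ClassicalEpsilon FunctionalExtensionality ProofIrrelevance PropExtensionality PeanoNat Lia Inverse_Image Cantor.
From mathcomp Require classical_sets boolp.
Global Set Bullet Behavior "Strict Subproofs".


Lemma asT (P : Prop) : P -> is_true (boolp.asbool P).
Proof. intros H. destruct (boolp.asboolP P); [reflexivity|contradiction]. Qed.
Lemma asE (P : Prop) : is_true (boolp.asbool P) -> P.
Proof. intros H. destruct (boolp.asboolP P); [assumption|discriminate]. Qed.

Lemma ZL (T : Type) (t0 : T) (R : T -> T -> Prop) :
  (forall t, R t t) -> (forall r s t, R r s -> R s t -> R r t) ->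
  (forall A : T -> Prop, (forall s t, A s -> A t -> R s t \/ R t s) ->
     exists t, forall s, A s -> R s t) ->
  exists t, forall s, R t s -> R s t.
Proof.
  intros Hr Ht Hc.
  destruct (@classical_sets.ZL_preorder T t0 (fun a b => boolp.asbool (R a b))) as [t Hm].
  - intros x; apply asT; auto.
  - intros r s t H1 H2; apply asT.
    apply (Ht r s t); apply asE; assumption.
  - intros A HA. destruct (Hc A) as [t Ht'].
    + intros s t Hs Htt. destruct (HA s t Hs Htt) as [H|H]; [left|right];
      apply asE; exact H.
    + exists t. intros s Hs. apply asT. auto.
  - exists t. intros s Hs. unfold classical_sets.premaximal in Hm.
    apply asE. apply Hm. apply asT. exact Hs.
Qed.

Lemma cle_refl A : card_le A A.
Proof. exists (fun x => x); auto. Qed.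

Lemma cle_trans A B C : card_le A B -> card_le B C -> card_le A C.
Proof.
  intros [f Hf] [g Hg]. exists (fun x => g (f x)). intros x y H. apply Hf, Hg, H.
Qed.

Lemma ceq_le A B : card_eq A B -> card_le A B.
Proof. intros [f [Hf _]]; exists f; exact Hf. Qed.

Lemma ceq_ge A B : card_eq A B -> card_le B A.
Proof.
  intros [f [Hf Hs]].
  exists (fun b => proj1_sig (constructive_indefinite_description _ (Hs b))).
  intros x y H.
  destruct (constructive_indefinite_description _ (Hs x)) as [a Ha].
  destruct (constructive_indefinite_description _ (Hs y)) as [a' Ha']. simpl in H.
  subst. reflexivity.
Qed.

Section CB.
Variables (A B : Type) (f : A -> B) (g : B -> A).
Hypotheses (Hf : forall x y, f x = f y -> x = y) (Hg : forall x y, g x = g y -> x = y).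

Fixpoint Cn (n : nat) : A -> Prop :=
  match n with
  | 0 => fun a => ~ exists b, g b = a
  | S n => fun a => exists a', Cn n a' /\ g (f a') = a
  end.
Definition Cc a := exists n, Cn n a.

Definition cbh (a : A) : B :=
  match excluded_middle_informative (Cc a) with
  | left _ => f a
  | right _ => epsilon (inhabits (f a)) (fun b => g b = a)
  end.

Lemma cbh_notC a : ~ Cc a -> g (cbh a) = a.
Proof.
  intros H. unfold cbh. destruct (excluded_middle_informative (Cc a)) as [c|c]; [contradiction|].
  apply (epsilon_spec (inhabits (f a)) (fun b => g b = a)).
  apply NNPP. intros Hn. apply H. exists 0. exact Hn.
Qed.

Lemma CB_bij : (forall x y, cbh x = cbh y -> x = y) /\ (forall b, exists a, cbh a = b).
Proof.
  split.
  - intros x y H.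
    destruct (classic (Cc x)) as [cx|cx]; destruct (classic (Cc y)) as [cy|cy].
    + unfold cbh in H. destruct (excluded_middle_informative (Cc x)); [|contradiction].
      destruct (excluded_middle_informative (Cc y)); [|contradiction]. apply Hf, H.
    + exfalso. apply cy. assert (E := cbh_notC y cy).
      unfold cbh at 1 in H. destruct (excluded_middle_informative (Cc x)); [|contradiction].
      destruct cx as [n Hn]. exists (S n). exists x. split; [exact Hn|]. rewrite H. exact E.
    + exfalso. apply cx. assert (E := cbh_notC x cx).
      unfold cbh at 2 in H. destruct (excluded_middle_informative (Cc y)); [|contradiction].
      destruct cy as [n Hn]. exists (S n). exists y. split; [exact Hn|]. rewrite <- H. exact E.
    + rewrite <- (cbh_notC x cx), <- (cbh_notC y cy), H. reflexivity.
  - intros b. destruct (classic (Cc (g b))) as [c|c].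
    + destruct c as [[|n] Hn].
      * exfalso. apply Hn. exists b; reflexivity.
      * destruct Hn as [a' [Ha' E]]. apply Hg in E. exists a'. unfold cbh.
        destruct (excluded_middle_informative (Cc a')) as [_|n']; [exact E|].
        exfalso; apply n'; exists n; exact Ha'.
    + exists (g b). apply Hg. apply cbh_notC. exact c.
Qed.
End CB.

Lemma CB A B : card_le A B -> card_le B A -> card_eq A B.
Proof.
  intros [f Hf] [g Hg]. exists (cbh A B f g). apply CB_bij; assumption.
Qed.

Lemma compar A B : card_le A B \/ card_le B A.
Proof.
  set (T := {R : A -> B -> Prop | (forall a b b', R a b -> R a b' -> b = b') /\
                                 (forall a a' b, R a b -> R a' b -> a = a')}).
  assert (t0 : T). { exists (fun _ _ => False). split; intros; contradiction. }
  destruct (ZL T t0 (fun s t => forall a b, proj1_sig s a b -> proj1_sig t a b)) as [t Ht].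
  - auto.
  - auto.
  - intros Ch HCh.
    assert (Hu : (forall a b b', (exists s, Ch s /\ proj1_sig s a b) ->
                 (exists s, Ch s /\ proj1_sig s a b') -> b = b') /\
                 (forall a a' b, (exists s, Ch s /\ proj1_sig s a b) ->
                 (exists s, Ch s /\ proj1_sig s a' b) -> a = a')).
    { split.
      - intros a b b' [s [Hs H1]] [s' [Hs' H2]].
        destruct (HCh s s' Hs Hs') as [L|L].
        + apply L in H1. destruct s' as [R [HR1 HR2]]. eapply HR1; eauto.
        + apply L in H2. destruct s as [R [HR1 HR2]]. eapply HR1; eauto.
      - intros a a' b [s [Hs H1]] [s' [Hs' H2]].
        destruct (HCh s s' Hs Hs') as [L|L].
        + apply L in H1. destruct s' as [R [HR1 HR2]]. eapply HR2; eauto.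
        + apply L in H2. destruct s as [R [HR1 HR2]]. eapply HR2; eauto. }
    exists (exist _ (fun a b => exists s, Ch s /\ proj1_sig s a b) Hu). intros s Hs a b H. simpl. exists s. auto.
  - destruct t as [R [HR1 HR2]]. simpl in Ht.
    destruct (classic (forall a, exists b, R a b)) as [Hd|Hd].
    + left. exists (fun a => proj1_sig (constructive_indefinite_description _ (Hd a))).
      intros x y E.
      destruct (constructive_indefinite_description _ (Hd x)) as [b Hb].
      destruct (constructive_indefinite_description _ (Hd y)) as [b' Hb']. simpl in E.
      subst. eapply HR2; eauto.
    + destruct (classic (forall b, exists a, R a b)) as [Hr|Hr].
      * right. exists (fun b => proj1_sig (constructive_indefinite_description _ (Hr b))).
        intros x y E.
        destruct (constructive_indefinite_description _ (Hr x)) as [b Hb].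
        destruct (constructive_indefinite_description _ (Hr y)) as [b' Hb']. simpl in E.
        subst. eapply HR1; eauto.
      * exfalso. apply not_all_ex_not in Hd as [a0 Ha0]. apply not_all_ex_not in Hr as [b0 Hb0].
        set (R' := fun a b => R a b \/ (a = a0 /\ b = b0)).
        assert (HR' : (forall a b b', R' a b -> R' a b' -> b = b') /\
                      (forall a a' b, R' a b -> R' a' b -> a = a')).
        { split.
          - intros a b b' [H1|[-> ->]] [H2|[E ->]]; eauto.
            + subst. exfalso; apply Ha0; eauto.
            + exfalso; apply Ha0; eauto.
          - intros a a' b [H1|[-> ->]] [H2|[-> E]]; eauto.
            + subst. exfalso; apply Hb0; eauto.
            + exfalso; apply Hb0; eauto. }
        assert (L := Ht (exist _ R' HR')). simpl in L.
        apply Ha0. exists b0. apply L.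
        ** intros a b H; left; exact H.
        ** right; auto.
Qed.

Lemma sval_inj {X} {P : X -> Prop} (a b : {x | P x}) : proj1_sig a = proj1_sig b -> a = b.
Proof. destruct a, b; simpl; intros ->; f_equal; apply proof_irrelevance. Qed.

Section Hess.
Variables (A : Type) (i : nat -> A).
Hypothesis Hi : forall m n, i m = i n -> m = n.

Definition HOK (p : (A -> Prop) * (A -> A -> A)) : Prop :=
  (forall n, fst p (i n)) /\
  (forall x y, fst p x -> fst p y -> fst p (snd p x y)) /\
  (forall x y x' y', fst p x -> fst p y -> fst p x' -> fst p y' ->
     snd p x y = snd p x' y' -> x = x' /\ y = y').

Definition HT := {p | HOK p}.
Definition HS (s : HT) := fst (proj1_sig s).
Definition HF (s : HT) := snd (proj1_sig s).
Definition HR (s t : HT) := (forall x, HS s x -> HS t x) /\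
   (forall x y, HS s x -> HS s y -> HF s x y = HF t x y).

Definition inv0 (x : A) : nat := epsilon (inhabits 0) (fun n => i n = x).
Lemma inv0_spec n : inv0 (i n) = n.
Proof. apply Hi. unfold inv0. apply (epsilon_spec (inhabits 0) (fun m => i m = i n)). eauto. Qed.

Lemma HOK0 : HOK ((fun x => exists n, i n = x), fun x y => i (Cantor.to_nat (inv0 x, inv0 y))).
Proof.
  split; [|split]; cbn [fst snd].
  - intros n; eauto.
  - intros; eauto.
  - intros x y x' y' [a <-] [b <-] [c <-] [d <-] E. pose proof (Hi _ _ E) as E1.
    rewrite !inv0_spec in E1.
    assert (E2 := f_equal Cantor.of_nat E1). rewrite !Cantor.cancel_of_to in E2.
    inversion E2; subst; auto.
Qed.
Definition Ht0 : HT := exist _ _ HOK0.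

Lemma HR_chain_bound (Ch : HT -> Prop) :
  (forall s t, Ch s -> Ch t -> HR s t \/ HR t s) -> exists t, forall s, Ch s -> HR s t.
Proof.
  intros HC. destruct (classic (exists s, Ch s)) as [[s0 Hs0]|Hne].
  2:{ exists Ht0. intros s Hs; exfalso; eauto. }
  set (Sx := fun x => exists s, Ch s /\ HS s x).
  assert (two : forall x y, Sx x -> Sx y -> exists s, Ch s /\ HS s x /\ HS s y).
  { intros x y [s [Hs Hx]] [t [Ht Hy]]. destruct (HC s t Hs Ht) as [[L _]|[L _]].
    - exists t; auto. - exists s; auto. }
  assert (agr : forall s t x y, Ch s -> Ch t -> HS s x -> HS s y -> HS t x -> HS t y ->
     HF s x y = HF t x y).
  { intros s t x y Hs Ht H1 H2 H3 H4. destruct (HC s t Hs Ht) as [[_ L]|[_ L]].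
    - apply L; auto. - symmetry; apply L; auto. }
  set (sel := fun x y => epsilon (inhabits Ht0) (fun s => Ch s /\ HS s x /\ HS s y)).
  assert (sel_spec : forall x y, Sx x -> Sx y -> Ch (sel x y) /\ HS (sel x y) x /\ HS (sel x y) y).
  { intros x y Hx Hy. apply (epsilon_spec (inhabits Ht0) (fun s => Ch s /\ HS s x /\ HS s y)).
    apply two; auto. }
  set (Fx := fun x y => HF (sel x y) x y).
  assert (OK : HOK (Sx, Fx)).
  { split; [|split]; simpl.
    - intros n. exists s0. split; [auto|]. apply (proj1 (proj2_sig s0)).
    - intros x y Hx Hy. destruct (sel_spec x y Hx Hy) as [H1 [H2 H3]].
      exists (sel x y). split; auto. unfold Fx. apply (proj1 (proj2 (proj2_sig (sel x y)))); auto.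
    - intros x y x' y' Hx Hy Hx' Hy' E.
      destruct (sel_spec x y Hx Hy) as [H1 [H2 H3]].
      destruct (sel_spec x' y' Hx' Hy') as [H1' [H2' H3']].
      unfold Fx in E.
      destruct (HC _ _ H1 H1') as [[L _]|[L _]].
      + assert (E3 : HF (sel x' y') x y = HF (sel x' y') x' y').
        { rewrite <- E. symmetry. apply agr; auto. }
        exact (proj2 (proj2 (proj2_sig (sel x' y'))) x y x' y' (L _ H2) (L _ H3) H2' H3' E3).
      + assert (E3 : HF (sel x y) x y = HF (sel x y) x' y').
        { rewrite E. apply agr; auto. }
        exact (proj2 (proj2 (proj2_sig (sel x y))) x y x' y' H2 H3 (L _ H2') (L _ H3') E3). }
  exists (exist _ _ OK). intros s Hs. split; simpl.
  - intros x Hx. exists s; auto.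
  - intros x y Hx Hy. unfold HF at 2. simpl. unfold Fx.
    assert (Sx x) by (exists s; auto). assert (Sx y) by (exists s; auto).
    destruct (sel_spec x y) as [H1 [H2 H3]]; auto.
Qed.

Lemma hess_main : card_le (A * A) A.
Proof.
  destruct (ZL HT Ht0 HR) as [t Ht].
  - intros s; split; auto.
  - intros r s t [H1 H2] [H3 H4]; split; auto.
    intros x y Hx Hy. rewrite H2; auto.
  - exact HR_chain_bound.
  - destruct t as [[S F] [P1 [P2 P3]]]. unfold HR, HS, HF in Ht; simpl in Ht.
    cbn [fst snd] in P1, P2, P3.
    assert (d01 : i 0 <> i 1) by (intros E; apply Hi in E; discriminate).
    assert (d02 : i 0 <> i 2) by (intros E; apply Hi in E; discriminate).
    assert (d12 : i 1 <> i 2) by (intros E; apply Hi in E; discriminate).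
    assert (notbig : ~ card_le {x | S x} {x | ~ S x}).
    { intros [psi0 Hpsi0].
      set (psi := fun x => match excluded_middle_informative (S x) with
                           | left p => proj1_sig (psi0 (exist _ x p)) | right _ => x end).
      assert (psi_out : forall x, S x -> ~ S (psi x)).
      { intros x Hx. unfold psi. destruct (excluded_middle_informative (S x)); [|contradiction].
        exact (proj2_sig (psi0 _)). }
      assert (psi_inj : forall x y, S x -> S y -> psi x = psi y -> x = y).
      { intros x y Hx Hy. unfold psi.
        destruct (excluded_middle_informative (S x)); [|contradiction].
        destruct (excluded_middle_informative (S y)); [|contradiction].
        intros E. apply sval_inj in E. apply Hpsi0 in E.
        exact (f_equal (@proj1_sig _ _) E). }
      set (Bs := fun y => exists x, S x /\ psi x = y).
      set (psinv := fun y => epsilon (inhabits (i 0)) (fun x => S x /\ psi x = y)).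
      assert (psinv_spec : forall y, Bs y -> S (psinv y) /\ psi (psinv y) = y).
      { intros y Hy. exact (epsilon_spec (inhabits (i 0)) (fun x => S x /\ psi x = y) Hy). }
      set (rep := fun z => if excluded_middle_informative (S z) then z else psinv z).
      set (S' := fun z => S z \/ Bs z).
      assert (rep1 : forall z, S' z -> S (rep z)).
      { intros z Hz; unfold rep; destruct (excluded_middle_informative (S z)) as [a|a]; [exact a|].
        destruct Hz as [Hz|Hz]; [contradiction|]. apply psinv_spec; auto. }
      assert (rep2 : forall z, S' z -> ~ S z -> psi (rep z) = z).
      { intros z Hz Hn; unfold rep; destruct (excluded_middle_informative (S z)) as [a|a]; [contradiction|].
        destruct Hz as [Hz|Hz]; [contradiction|]. apply psinv_spec; auto. }
      set (tag := fun x y => if excluded_middle_informative (S x) then i 0 else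
                             if excluded_middle_informative (S y) then i 1 else i 2).
      set (F' := fun x y => if excluded_middle_informative (S x /\ S y) then F x y
                            else psi (F (tag x y) (F (rep x) (rep y)))).
      assert (tagS : forall x y, S (tag x y)).
      { intros x y; unfold tag; destruct (excluded_middle_informative (S x));
        [|destruct (excluded_middle_informative (S y))]; apply P1. }
      assert (tag0 : forall x y, S x -> tag x y = i 0).
      { intros x y sx; unfold tag; destruct (excluded_middle_informative (S x)); tauto. }
      assert (tag1 : forall x y, ~ S x -> S y -> tag x y = i 1).
      { intros x y sx sy; unfold tag; destruct (excluded_middle_informative (S x)); [tauto|].
        destruct (excluded_middle_informative (S y)); tauto. }
      assert (tag2 : forall x y, ~ S x -> ~ S y -> tag x y = i 2).
      { intros x y sx sy; unfold tag; destruct (excluded_middle_informative (S x)); [tauto|].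
        destruct (excluded_middle_informative (S y)); tauto. }
      assert (rep_inj : forall z z', S' z -> S' z' -> (S z <-> S z') -> rep z = rep z' -> z = z').
      { intros z z' Hz Hz' Hiff E. destruct (classic (S z)) as [sz|sz].
        - unfold rep in E. destruct (excluded_middle_informative (S z)); [|tauto].
          destruct (excluded_middle_informative (S z')); tauto.
        - rewrite <- (rep2 z Hz sz), <- (rep2 z' Hz' (fun h => sz (proj2 Hiff h))), E. reflexivity. }
      assert (OK : HOK (S', F')).
      { split; [|split]; cbn [fst snd].
        - intros n; left; apply P1.
        - intros x y Hx Hy. unfold F'. destruct (excluded_middle_informative (S x /\ S y)) as [[a b]|nb].
          + left; auto.
          + right. exists (F (tag x y) (F (rep x) (rep y))). split; auto.
        - intros x y x' y' Hx Hy Hx' Hy'. unfold F'.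
          destruct (excluded_middle_informative (S x /\ S y)) as [[a b]|nb];
          destruct (excluded_middle_informative (S x' /\ S y')) as [[a' b']|nb'].
          + apply P3; auto.
          + intros E. exfalso. apply (psi_out (F (tag x' y') (F (rep x') (rep y')))).
            * apply P2; auto.
            * rewrite <- E. apply P2; auto.
          + intros E. exfalso. apply (psi_out (F (tag x y) (F (rep x) (rep y)))).
            * apply P2; auto.
            * rewrite E. apply P2; auto.
          + intros E. apply psi_inj in E; try (apply P2; auto).
            apply P3 in E; try (apply P2; auto).
            destruct E as [Et E]. apply P3 in E; auto. destruct E as [Ex Ey].
            assert (iffx : (S x <-> S x') /\ (S y <-> S y')).
            { destruct (classic (S x)) as [sx|sx]; destruct (classic (S x')) as [sx'|sx'];
              destruct (classic (S y)) as [sy|sy]; destruct (classic (S y')) as [sy'|sy'];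
              try tauto;
              rewrite ?(tag0 x y sx), ?(tag0 x' y' sx'), ?(tag1 x y sx sy), ?(tag1 x' y' sx' sy'),
                ?(tag2 x y sx sy), ?(tag2 x' y' sx' sy') in Et; congruence. }
            split; apply rep_inj; try tauto. all: apply tagS. }
      assert (L := Ht (exist _ (S', F') OK)). cbn [fst snd proj1_sig] in L.
      destruct L as [L _].
      { split; cbn [fst snd].
        - intros x Hx; left; exact Hx.
        - intros x y Hx Hy. unfold F'. destruct (excluded_middle_informative (S x /\ S y)); tauto. }
      apply (psi_out (i 0) (P1 0)). apply L. right. exists (i 0). split; auto. }
    destruct (compar {x | ~ S x} {x | S x}) as [[chi Hchi]|C]; [|contradiction].
    set (j := fun a => match excluded_middle_informative (S a) with
              | left _ => F (i 0) a | right n => F (i 1) (proj1_sig (chi (exist _ a n))) end).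
    assert (jS : forall a, S (j a)).
    { intros a; unfold j; destruct (excluded_middle_informative (S a)); apply P2; auto.
      exact (proj2_sig (chi _)). }
    assert (jinj : forall a b, j a = j b -> a = b).
    { intros a b; unfold j.
      destruct (excluded_middle_informative (S a)) as [sa|sa];
      destruct (excluded_middle_informative (S b)) as [sb|sb]; intros E;
      apply P3 in E; auto; try (exact (proj2_sig (chi _))); destruct E as [E1 E2]; try congruence.
      apply sval_inj in E2. apply Hchi in E2. exact (f_equal (@proj1_sig _ _) E2). }
    exists (fun p => F (j (fst p)) (j (snd p))).
    intros [a b] [c d] E. cbn [fst snd] in E. apply P3 in E; auto.
    destruct E as [E1 E2]. apply jinj in E1; apply jinj in E2. subst; reflexivity.
Qed.
End Hess.

Lemma hessenberg A : infinite_type A -> card_le (A * A) A.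
Proof. intros [i Hi]. exact (hess_main A i Hi). Qed.


Section AECB.
Variable tau : vocab.
Variable K : AEC tau.

Definition arF (F : fsym tau) := {k : nat | k < farity tau F}.
Definition arR (R : rsym tau) := {k : nat | k < rarity tau R}.

Definition closedP {Y} (f : forall F, (arF F -> Y) -> Y) (P : Y -> Prop) :=
  forall F xs, (forall k, P (xs k)) -> P (f F xs).

Definition sub {Y} (f : forall F, (arF F -> Y) -> Y) (r : forall R, (arR R -> Y) -> Prop)
  (P : Y -> Prop) (c : closedP f P) : structure tau :=
  {| car := {y | P y};
     fint := fun F xs => exist _ (f F (fun k => proj1_sig (xs k))) (c F _ (fun k => proj2_sig (xs k)));
     rint := fun R xs => r R (fun k => proj1_sig (xs k)) |}.

Lemma leK_ext (A B : structure tau) (f g : car A -> car B) :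
  leK K A B f -> (forall x, f x = g x) -> leK K A B g.
Proof. intros H E. replace g with f; [exact H|]. apply functional_extensionality; exact E. Qed.

Lemma iso_inv (A B : structure tau) (f : car A -> car B) : is_iso A B f ->
  exists g, is_iso B A g /\ (forall x, g (f x) = x) /\ (forall y, f (g y) = y).
Proof.
  intros [[Hi [Hf Hr]] Hs].
  set (g := fun y => proj1_sig (constructive_indefinite_description _ (Hs y))).
  assert (fg : forall y, f (g y) = y).
  { intros y; unfold g; destruct (constructive_indefinite_description _ (Hs y)); simpl; auto. }
  assert (gf : forall x, g (f x) = x) by (intros x; apply Hi; rewrite fg; reflexivity).
  exists g. split; [|split; auto].
  split; [split; [|split]|].
  - intros x y E. rewrite <- (fg x), <- (fg y), E. reflexivity.
  - intros F ys. apply Hi. rewrite fg, Hf. f_equal. apply functional_extensionality.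
    intros k; rewrite fg; reflexivity.
  - intros R ys. rewrite Hr.
    replace (fun k => f (g (ys k))) with ys; [tauto|].
    apply functional_extensionality; intros k; rewrite fg; reflexivity.
  - intros x; exists (f x); auto.
Qed.

Lemma iso_leK (A B : structure tau) (f : car A -> car B) : inK K A -> is_iso A B f -> leK K A B f.
Proof. apply leK_iso. Qed.

Lemma iso_leK_inv (A B : structure tau) (f : car A -> car B) : inK K B -> is_iso A B f ->
  exists g, leK K B A g /\ (forall x, g (f x) = x) /\ (forall y, f (g y) = y).
Proof.
  intros HB Hf. destruct (iso_inv A B f Hf) as [g [Hg [H1 H2]]].
  exists g; split; auto. apply leK_iso; auto.
Qed.

Lemma emb_inj (A B : structure tau) f : is_embedding A B f -> forall x y, f x = f y -> x = y.
Proof. intros [H _]; exact H. Qed.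

Lemma incl_emb {Y} f r (P P' : Y -> Prop) c c' (g : car (sub f r P c) -> car (sub f r P' c')) :
  (forall x, proj1_sig (g x) = proj1_sig x) -> is_embedding (sub f r P c) (sub f r P' c') g.
Proof.
  intros Hg. split; [|split].
  - intros x y E. apply sval_inj. rewrite <- Hg, E, Hg. reflexivity.
  - intros F xs. apply sval_inj. rewrite Hg. simpl. f_equal.
    apply functional_extensionality; intros k. rewrite Hg; reflexivity.
  - intros R xs. simpl. match goal with |- _ ?a <-> _ ?b => replace b with a; [tauto|] end.
    apply functional_extensionality; intros k. rewrite Hg; reflexivity.
Qed.

Lemma sub_iso_ext {Y} f r (P P' : Y -> Prop) c c' (g : car (sub f r P c) -> car (sub f r P' c')) :
  (forall y, P' y -> P y) -> (forall x, proj1_sig (g x) = proj1_sig x) ->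
  is_iso (sub f r P c) (sub f r P' c') g.
Proof.
  intros HP Hg. split; [apply incl_emb; auto|].
  intros y. exists (exist _ (proj1_sig y) (HP _ (proj2_sig y))). apply sval_inj. rewrite Hg. reflexivity.
Qed.

Definition agree {Y} (f f' : forall F, (arF F -> Y) -> Y) (r r' : forall R, (arR R -> Y) -> Prop)
  (P : Y -> Prop) :=
  (forall F xs, (forall k, P (xs k)) -> f F xs = f' F xs) /\
  (forall R xs, (forall k, P (xs k)) -> (r R xs <-> r' R xs)).

Lemma sub_iso_agree {Y} f f' r r' (P : Y -> Prop) c c' :
  agree f f' r r' P -> is_iso (sub f r P c) (sub f' r' P c') (fun x => x).
Proof.
  intros [Hf Hr]. split; [split; [|split]|].
  - auto.
  - intros F xs. apply sval_inj. simpl. apply Hf. intros k; exact (proj2_sig (xs k)).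
  - intros R xs. simpl. apply Hr. intros k; exact (proj2_sig (xs k)).
  - intros y; exists y; auto.
Qed.

Lemma common_index {Y I} (lt : I -> I -> Prop)
  (tot : forall i j, lt i j \/ i = j \/ lt j i) (D : I -> Prop) (Dne : exists i, D i)
  (Q : I -> Y -> Prop) (mono : forall i j, lt i j -> forall y, Q i y -> Q j y)
  (n : nat) (xs : {k : nat | k < n} -> Y) :
  (forall k, exists i, D i /\ Q i (xs k)) -> exists i, D i /\ forall k, Q i (xs k).
Proof.
  intros H.
  assert (G : forall m, m <= n -> exists i, D i /\ forall k, proj1_sig k < m -> Q i (xs k)).
  { induction m as [|m IH]; intros Hm.
    - destruct Dne as [i Hi]. exists i; split; auto. intros k Hk; inversion Hk.
    - destruct (IH (Nat.le_trans _ _ _ (Nat.le_succ_diag_r m) Hm)) as [i [Di Hi]].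
      assert (Hmn : m < n) by exact Hm.
      destruct (H (exist _ m Hmn)) as [i' [Di' Hi']].
      assert (Hk : forall k : {k : nat | k < n}, proj1_sig k < S m -> proj1_sig k < m \/ k = exist _ m Hmn).
      { intros k Hk. destruct (Nat.eq_dec (proj1_sig k) m) as [e|e].
        - right. apply sval_inj. exact e.
        - left. lia. }
      destruct (tot i i') as [L|[E|L]].
      + exists i'; split; auto. intros k Hk'. destruct (Hk k Hk') as [h| ->]; auto.
        apply (mono i i' L); auto.
      + subst. exists i'; split; auto. intros k Hk'. destruct (Hk k Hk') as [h| ->]; auto.
      + exists i; split; auto. intros k Hk'. destruct (Hk k Hk') as [h| ->]; auto.
        apply (mono i' i L); auto. }
  destruct (G n (le_n n)) as [i [Di Hi]]. exists i; split; auto.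
  intros k; apply Hi; exact (proj2_sig k).
Qed.

Lemma closed_union {Y I} (lt : I -> I -> Prop)
  (tot : forall i j, lt i j \/ i = j \/ lt j i) (D : I -> Prop) (Dne : exists i, D i)
  (Q : I -> Y -> Prop) (mono : forall i j, lt i j -> forall y, Q i y -> Q j y)
  f (cQ : forall i, closedP f (Q i)) :
  closedP f (fun y => exists i, D i /\ Q i y).
Proof.
  intros F xs H. destruct (common_index lt tot D Dne Q mono _ xs H) as [i [Di Hi]].
  exists i; split; auto. apply cQ; auto.
Qed.

Lemma closedP_iff {Y} f (P P' : Y -> Prop) : closedP f P -> (forall y, P y <-> P' y) -> closedP f P'.
Proof. intros c H F xs Hx. apply H, c. intros k; apply H, Hx. Qed.

End AECB.


Section CCU.
Variable tau : vocab.
Variable K : AEC tau.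
Context {Y : Type} (f : forall F, (arF tau F -> Y) -> Y) (r : forall R, (arR tau R -> Y) -> Prop)
  {I : Type} (lt : I -> I -> Prop) (wo : well_order lt) (inh : inhabited I)
  (Q : I -> Y -> Prop) (cQ : forall i, closedP tau f (Q i)) (ne : forall i, exists y, Q i y)
  (mono : forall i j, lt i j -> forall y, Q i y -> Q j y)
  (inKQ : forall i, inK K (sub tau f r (Q i) (cQ i)))
  (lek : forall i j, lt i j -> exists g, leK K (sub tau f r (Q i) (cQ i)) (sub tau f r (Q j) (cQ j)) g /\
            forall x, proj1_sig (g x) = proj1_sig x)
  (cont : forall j, is_limit lt j -> forall y, Q j y -> exists i, lt i j /\ Q i y)
  (Qu : Y -> Prop) (cu : closedP tau f Qu) (Hu : forall y, Qu y <-> exists i, Q i y).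

Definition ccu_inh (j : I) : inhabited {y | Q j y} :=
  match ne j with ex_intro y Hy => inhabits (exist _ y Hy) end.

Definition ccu_fm (i j : I) (x : {y | Q i y}) : {y | Q j y} :=
  match excluded_middle_informative (Q j (proj1_sig x)) with
  | left p => exist (Q j) (proj1_sig x) p
  | right _ => epsilon (ccu_inh j) (fun _ => True)
  end.

Lemma ccu_fm_val i j x : Q j (proj1_sig x) -> proj1_sig (ccu_fm i j x) = proj1_sig x.
Proof. intros H. unfold ccu_fm. destruct (excluded_middle_informative _); [reflexivity|contradiction]. Qed.

Lemma ccu_fm_lt i j x : lt i j -> proj1_sig (ccu_fm i j x) = proj1_sig x.
Proof. intros L. apply ccu_fm_val. apply (mono i j L). exact (proj2_sig x). Qed.

Definition ccu_u (i : I) (x : {y | Q i y}) : {y | Qu y} :=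
  exist Qu (proj1_sig x) (proj2 (Hu _) (ex_intro _ i (proj2_sig x))).

Lemma CCU : inK K (sub tau f r Qu cu) /\
  (forall i, exists g, leK K (sub tau f r (Q i) (cQ i)) (sub tau f r Qu cu) g /\
                       forall x, proj1_sig (g x) = proj1_sig x) /\
  (forall (N : structure tau) (phi : Y -> car N),
     (forall i, leK K (sub tau f r (Q i) (cQ i)) N (fun x => phi (proj1_sig x))) ->
     leK K (sub tau f r Qu cu) N (fun x => phi (proj1_sig x))).
Proof.
  set (Mi := fun i => sub tau f r (Q i) (cQ i)).
  assert (Hlek : forall i j, lt i j -> leK K (Mi i) (Mi j) (ccu_fm i j)).
  { intros i j L. destruct (lek i j L) as [g [Hg Hv]]. apply (leK_ext tau K _ _ g); auto.
    intros x. apply sval_inj. rewrite Hv, ccu_fm_lt; auto. }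
  assert (Hcomp : forall i j k, lt i j -> lt j k -> forall x, ccu_fm j k (ccu_fm i j x) = ccu_fm i k x).
  { intros i j k L1 L2 x. apply sval_inj. rewrite !ccu_fm_lt; auto.
    destruct wo as [_ [Tr _]]. eauto. }
  assert (Hcont : forall j, is_limit lt j ->
      union_cocone lt (fun i => lt i j) Mi ccu_fm (Mi j) (fun i => ccu_fm i j)).
  { intros j Lj. split; [|split].
    - intros i L. apply (leK_emb tau K). apply Hlek; auto.
    - intros i i' L1 L2 L3 x. apply Hcomp; auto.
    - intros y. destruct (cont j Lj (proj1_sig y) (proj2_sig y)) as [i [L Hi]].
      exists i. split; auto. exists (exist _ (proj1_sig y) Hi). apply sval_inj.
      rewrite ccu_fm_lt; auto. }
  assert (Hcoc : union_cocone lt (fun _ => True) Mi ccu_fm (sub tau f r Qu cu) ccu_u).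
  { split; [|split].
    - intros i _. apply incl_emb. reflexivity.
    - intros i j _ _ L x. apply sval_inj. simpl. apply ccu_fm_lt; auto.
    - intros y. destruct (proj1 (Hu _) (proj2_sig y)) as [i Hi].
      exists i; split; auto. exists (exist _ _ Hi). apply sval_inj. reflexivity. }
  destruct (leK_chain tau K I lt wo inh Mi ccu_fm Hlek inKQ Hcomp Hcont (sub tau f r Qu cu) ccu_u Hcoc)
    as [H1 [H2 H3]].
  split; [exact H1|split].
  - intros i. exists (ccu_u i). split; [exact (H2 i)|intros x; reflexivity].
  - intros N phi Hphi. apply (H3 N (fun i x => phi (proj1_sig x))).
    + exact Hphi.
    + intros i j L x. rewrite ccu_fm_lt; auto.
    + intros i x; reflexivity.
Qed.
End CCU.

Lemma restrict_wo {I : Type} (lt : I -> I -> Prop) (P : I -> Prop) :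
  well_order lt -> well_order (fun a b : {j | P j} => lt (proj1_sig a) (proj1_sig b)).
Proof.
  intros [wf [tr tot]]. split; [|split].
  - apply (wf_inverse_image _ _ lt (@proj1_sig _ _) wf).
  - intros a b c; apply tr.
  - intros a b. destruct (tot (proj1_sig a) (proj1_sig b)) as [h|[h|h]]; auto.
    right; left; apply sval_inj; exact h.
Qed.

Section NCU.
Variable tau : vocab.
Variable K : AEC tau.
Context {Y : Type} (f : forall F, (arF tau F -> Y) -> Y) (r : forall R, (arR tau R -> Y) -> Prop)
  {I : Type} (lt : I -> I -> Prop) (wo : well_order lt) (inh : inhabited I)
  (Q : I -> Y -> Prop) (cQ : forall i, closedP tau f (Q i)) (ne : forall i, exists y, Q i y)
  (mono : forall i j, lt i j -> forall y, Q i y -> Q j y)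
  (N : structure tau) (phi : Y -> car N)
  (Hphi : forall i, leK K (sub tau f r (Q i) (cQ i)) N (fun x => phi (proj1_sig x)))
  (Qu : Y -> Prop) (cu : closedP tau f Qu) (Hu : forall y, Qu y <-> exists i, Q i y).

Definition Qs (i : I) (y : Y) : Prop :=
  (is_limit lt i /\ exists j, lt j i /\ Q j y) \/ (~ is_limit lt i /\ Q i y).

Lemma Qs_le i y : Qs i y -> exists j, (lt j i \/ j = i) /\ Q j y.
Proof. intros [[_ [j [L H]]]|[_ H]]; eauto. Qed.

Lemma Qs_of_Q k k' y : lt k k' -> Q k y -> Qs k' y.
Proof.
  intros L H. destruct (classic (is_limit lt k')) as [l|l].
  - left; split; eauto.
  - right; split; auto. apply (mono k k' L); auto.
Qed.

Lemma Qs_mono i j y : lt i j -> Qs i y -> Qs j y.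
Proof.
  intros L H. destruct (Qs_le i y H) as [k [[L'|E] Hk]].
  - apply (Qs_of_Q k j y); auto. destruct wo as [_ [tr _]]; eauto.
  - rewrite E in Hk. apply (Qs_of_Q i j y); auto.
Qed.

Lemma Qs_ne i : exists y, Qs i y.
Proof.
  destruct (classic (is_limit lt i)) as [l|l].
  - destruct l as [[j L] l']. destruct (ne j) as [y Hy]. exists y. left; split; [split; [exists j; auto|auto]|eauto].
  - destruct (ne i) as [y Hy]. exists y; right; auto.
Qed.

Lemma cQs i : closedP tau f (Qs i).
Proof.
  destruct wo as [wf [tr tot]].
  destruct (classic (is_limit lt i)) as [l|l].
  - apply (closedP_iff tau f (fun y => exists j, lt j i /\ Q j y)).
    + apply (closed_union tau lt tot (fun j => lt j i)); auto. destruct l as [h _]; exact h.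
    + intros y; split.
      * intros h; left; split; auto.
      * intros [[_ h]|[h _]]; [exact h|contradiction].
  - apply (closedP_iff tau f (Q i)); auto.
    intros y; split.
    + intros h; right; auto.
    + intros [[h _]|[_ h]]; [contradiction|exact h].
Qed.


Lemma Qs_claim i : leK K (sub tau f r (Qs i) (cQs i)) N (fun x => phi (proj1_sig x)).
Proof.
  destruct wo as [wf [tr tot]] eqn:Ewo.
  induction i as [i IH] using (well_founded_ind wf).
  destruct (classic (is_limit lt i)) as [l|l].
  - set (lt' := fun a b : {j | lt j i} => lt (proj1_sig a) (proj1_sig b)).
    assert (wo' : well_order lt') by (apply restrict_wo; exact wo).
    assert (inh' : inhabited {j | lt j i}).
    { destruct l as [[j L] _]. exact (inhabits (exist _ j L)). }
    assert (inK' : forall j : {j | lt j i}, inK K (sub tau f r (Qs (proj1_sig j)) (cQs (proj1_sig j)))).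
    { intros j. exact (proj1 (leK_inK tau K _ _ _ (IH _ (proj2_sig j)))). }
    destruct (CCU tau K f r lt' wo' inh' (fun j => Qs (proj1_sig j)) (fun j => cQs (proj1_sig j))
       (fun j => Qs_ne (proj1_sig j)) (fun a b L y => Qs_mono _ _ y L) inK')
      with (Qu := Qs i) (cu := cQs i) as [_ [_ H3]].
    + intros a b L. exists (fun x : {y | Qs (proj1_sig a) y} => exist _ (proj1_sig x) (Qs_mono _ _ _ L (proj2_sig x)) : {y | Qs (proj1_sig b) y}).
      split; [|reflexivity].
      apply (leK_coh tau K (sub tau f r (Qs (proj1_sig a)) (cQs _)) (sub tau f r (Qs (proj1_sig b)) (cQs _)) N (fun x => phi (proj1_sig x)) (fun x => phi (proj1_sig x))).
      * apply IH. exact (proj2_sig a).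
      * apply IH. exact (proj2_sig b).
      * reflexivity.
    + intros j lj y Hy.
      assert (lj' : is_limit lt (proj1_sig j)).
      { destruct lj as [[a La] lj]. split; [exists (proj1_sig a); exact La|].
        intros k Lk. assert (Lki : lt k i) by (apply (tr _ _ _ Lk); exact (proj2_sig j)).
        destruct (lj (exist _ k Lki) Lk) as [b [L1 L2]]. exists (proj1_sig b); auto. }
      destruct Hy as [[_ [k [Lk Hk]]]|[h _]]; [|contradiction].
      destruct lj' as [_ lj']. destruct (lj' k Lk) as [k' [L1 L2]].
      assert (Lki : lt k' i) by (apply (tr _ _ _ L2); exact (proj2_sig j)).
      exists (exist _ k' Lki). split; [exact L2|]. apply (Qs_of_Q k k'); auto.
    + intros y; split.
      * intros [[_ [k [Lk Hk]]]|[h _]]; [|contradiction].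
        destruct l as [_ l]. destruct (l k Lk) as [k' [L1 L2]].
        exists (exist _ k' L2). apply (Qs_of_Q k k'); auto.
      * intros [j Hj]. destruct (Qs_le _ _ Hj) as [k [Lk Hk]].
        left; split; auto. exists k; split; auto.
        destruct Lk as [Lk| ->]; [apply (tr _ _ _ Lk); exact (proj2_sig j)|exact (proj2_sig j)].
    + apply H3. intros j. apply IH. exact (proj2_sig j).
  - assert (HiK : inK K (sub tau f r (Q i) (cQ i))) by exact (proj1 (leK_inK tau K _ _ _ (Hphi i))).
    assert (iso1 : is_iso (sub tau f r (Q i) (cQ i)) (sub tau f r (Qs i) (cQs i))
                     (fun x => exist _ (proj1_sig x) (or_intror (conj l (proj2_sig x))))).
    { apply sub_iso_ext; [|reflexivity]. intros y [[h _]|[_ h]]; [contradiction|exact h]. }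
    assert (HsK : inK K (sub tau f r (Qs i) (cQs i))) by (eapply (inK_iso tau K); eauto).
    assert (Hin : forall y, Qs i y -> Q i y) by (intros y [[h _]|[_ h]]; [contradiction|exact h]).
    assert (iso2 : is_iso (sub tau f r (Qs i) (cQs i)) (sub tau f r (Q i) (cQ i))
                     (fun x => exist _ (proj1_sig x) (Hin _ (proj2_sig x)))).
    { apply sub_iso_ext; [|reflexivity]. intros y h; right; auto. }
    apply (leK_comp tau K (sub tau f r (Qs i) (cQs i)) (sub tau f r (Q i) (cQ i)) N
               (fun x => exist _ (proj1_sig x) (Hin _ (proj2_sig x)))
               (fun x => phi (proj1_sig x))).
    + apply leK_iso; auto.
    + apply Hphi.
Qed.

Lemma NCU : inK K (sub tau f r Qu cu) /\ leK K (sub tau f r Qu cu) N (fun x => phi (proj1_sig x)).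
Proof.
  destruct wo as [wf [tr tot]] eqn:Ewo.
  destruct (classic (exists m, forall i, ~ lt m i)) as [[m Hm]|Hnm].
  - assert (HmK : inK K (sub tau f r (Q m) (cQ m))) by exact (proj1 (leK_inK tau K _ _ _ (Hphi m))).
    assert (Hin : forall y, Qu y -> Q m y).
    { intros y Hy. apply Hu in Hy. destruct Hy as [i Hi]. destruct (tot i m) as [L|[E|L]].
      - apply (mono i m L); auto. - subst; auto. - exfalso; apply (Hm i L). }
    assert (iso1 : is_iso (sub tau f r (Q m) (cQ m)) (sub tau f r Qu cu)
                     (fun x => exist _ (proj1_sig x) (proj2 (Hu _) (ex_intro _ m (proj2_sig x))))).
    { apply sub_iso_ext; [|reflexivity]. exact Hin. }
    assert (HuK : inK K (sub tau f r Qu cu)) by (eapply (inK_iso tau K); eauto).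
    split; [exact HuK|].
    assert (iso2 : is_iso (sub tau f r Qu cu) (sub tau f r (Q m) (cQ m))
                     (fun x => exist _ (proj1_sig x) (Hin _ (proj2_sig x)))).
    { apply sub_iso_ext; [|reflexivity]. intros y h. apply Hu. eauto. }
    apply (leK_comp tau K (sub tau f r Qu cu) (sub tau f r (Q m) (cQ m)) N
               (fun x => exist _ (proj1_sig x) (Hin _ (proj2_sig x)))
               (fun x => phi (proj1_sig x))).
    + apply leK_iso; auto.
    + apply Hphi.
  - assert (inKs : forall i, inK K (sub tau f r (Qs i) (cQs i))).
    { intros i. exact (proj1 (leK_inK tau K _ _ _ (Qs_claim i))). }
    destruct (CCU tau K f r lt wo inh Qs cQs Qs_ne (fun a b L y => Qs_mono a b y L) inKs) with (Qu := Qu) (cu := cu)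
      as [H1 [_ H3]].
    + intros a b L. exists (fun x : {y | Qs a y} => exist _ (proj1_sig x) (Qs_mono _ _ _ L (proj2_sig x)) : {y | Qs b y}).
      split; [|reflexivity].
      apply (leK_coh tau K (sub tau f r (Qs a) (cQs _)) (sub tau f r (Qs b) (cQs _)) N (fun x => phi (proj1_sig x)) (fun x => phi (proj1_sig x))).
      * apply Qs_claim. * apply Qs_claim. * reflexivity.
    + intros j lj y Hy. destruct Hy as [[_ [k [Lk Hk]]]|[h _]]; [|contradiction].
      destruct lj as [_ lj]. destruct (lj k Lk) as [k' [L1 L2]].
      exists k'. split; [exact L2|]. apply (Qs_of_Q k k'); auto.
    + intros y; split.
      * intros Hy. apply Hu in Hy. destruct Hy as [i Hi].
        destruct (not_all_not_ex _ _ (fun h => Hnm (ex_intro _ i h))) as [j Lj].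
        exists j. apply (Qs_of_Q i j); auto.
      * intros [j Hj]. destruct (Qs_le _ _ Hj) as [k [_ Hk]]. apply Hu. eauto.
    + split; [exact H1|]. apply H3. intros i. apply Qs_claim.
Qed.
End NCU.


Lemma option_le A : infinite_type A -> card_le (option A) A.
Proof.
  intros HA. apply (cle_trans _ (A * A)); [|apply hessenberg; auto].
  destruct HA as [i Hi].
  exists (fun o => match o with None => (i 0, i 0) | Some a => (a, i 1) end).
  intros [a|] [b|] E; inversion E; auto.
  - exfalso. apply Hi in H1. discriminate.
  - exfalso. apply Hi in H1. discriminate.
Qed.

Lemma prod_le A B C D : card_le A C -> card_le B D -> card_le (A * B) (C * D).
Proof.
  intros [f Hf] [g Hg]. exists (fun p => (f (fst p), g (snd p))).
  intros [a b] [c d] E. inversion E. f_equal; auto.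
Qed.

Lemma option_map_le A B : card_le A B -> card_le (option A) (option B).
Proof.
  intros [f Hf]. exists (fun o => match o with None => None | Some a => Some (f a) end).
  intros [a|] [b|] E; inversion E; auto. f_equal; auto.
Qed.

Section Main.
Variables (tau : vocab) (K : AEC tau) (Lam Kap W : Type)
  (ltW : W -> W -> Prop)
  (hLinf : infinite_type Lam) (hKinf : infinite_type Kap) (hLK : card_le Lam Kap)
  (hW : is_succ_card_ordinal Lam ltW)
  (hLS : LS_property (inK K) (leK K) Kap) (hAP : amalgamation K Kap)
  (T : wseq ltW -> Prop) (hT : is_subtree T) (hTne : exists eta, T eta)
  (hlev : levels_le T)
  (M : wseq ltW -> structure tau)
  (h : forall eta nu : wseq ltW, car (M eta) -> car (M nu))
  (hM : forall eta, T eta -> inK K (M eta) /\ card_eq (car (M eta)) Kap)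
  (hh : forall eta nu, T eta -> T nu -> initseg eta nu -> leK K (M eta) (M nu) (h eta nu))
  (hid : forall eta, T eta -> forall x, h eta eta x = x)
  (hcomp : forall eta nu rho, T eta -> T nu -> T rho -> initseg eta nu -> initseg nu rho ->
             forall x, h nu rho (h eta nu x) = h eta rho x).

Lemma woW : well_order ltW. Proof. exact (proj1 hW). Qed.
Lemma wfW : well_founded ltW. Proof. exact (proj1 woW). Qed.
Lemma trW : forall a b c, ltW a b -> ltW b c -> ltW a c. Proof. exact (proj1 (proj2 woW)). Qed.
Lemma totW : forall a b, ltW a b \/ a = b \/ ltW b a. Proof. exact (proj2 (proj2 woW)). Qed.
Lemma irrW : forall a, ~ ltW a a.
Proof. intros a. induction a as [a IH] using (well_founded_ind wfW). intros L. exact (IH a L L). Qed.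
Lemma asymW : forall a b, ltW a b -> ~ ltW b a.
Proof. intros a b L1 L2. exact (irrW a (trW _ _ _ L1 L2)). Qed.

Definition k0 : Kap := proj1_sig (constructive_indefinite_description _ hKinf) 0.

Lemma KK : card_le (Kap * Kap) Kap. Proof. apply hessenberg; auto. Qed.
Lemma optK : card_le (option Kap) Kap. Proof. apply option_le; auto. Qed.

Lemma Winf : infinite_type W.
Proof.
  destruct (compar nat W) as [H|H]; auto.
  exfalso. apply (proj2 (proj2 hW)). apply (cle_trans _ nat); auto.
Qed.

Lemma W_ne : exists w : W, True.
Proof. destruct Winf as [i _]. exists (i 0); auto. Qed.

Lemma W_min : exists m, forall b, ~ ltW b m.
Proof.
  destruct W_ne as [w _]. induction w as [w IH] using (well_founded_ind wfW).
  destruct (classic (exists b, ltW b w)) as [[b L]|N].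
  - apply (IH b L).
  - exists w. intros b L. apply N. eauto.
Qed.

Definition mW : W := proj1_sig (constructive_indefinite_description _ W_min).
Lemma mW_min : forall b, ~ ltW b mW.
Proof. exact (proj2_sig (constructive_indefinite_description _ W_min)). Qed.

Definition root0 : wseq ltW := {| len := mW; ent := fun b _ => b |}.

Lemma wseq_eq (a b : wseq ltW) : len a = len b ->
  (forall x p q, ent a x p = ent b x q) -> a = b.
Proof.
  destruct a as [la ea], b as [lb eb]. simpl. intros E. subst lb. intros H. f_equal.
  apply functional_extensionality_dep; intros x. apply functional_extensionality_dep; intros p.
  apply H.
Qed.

Lemma initseg_trans (a b c : wseq ltW) : initseg a b -> initseg b c -> initseg a c.
Proof.
  intros [L1 E1] [L2 E2]. split.
  - destruct L1 as [L1|L1]; destruct L2 as [L2|L2].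
    + left; congruence.
    + right; rewrite L1; auto.
    + right; rewrite <- L2; auto.
    + right; eapply trW; eauto.
  - intros x p q.
    assert (q' : ltW x (len b)).
    { destruct L1 as [L1|L1]; [rewrite <- L1; exact p|exact (trW _ _ _ p L1)]. }
    rewrite (E1 x p q'). apply E2.
Qed.

Lemma root_init (eta : wseq ltW) : initseg root0 eta.
Proof.
  split.
  - simpl. destruct (totW mW (len eta)) as [L|[E|L]]; auto. exfalso; apply (mW_min _ L).
  - intros x p q. exfalso. exact (mW_min x p).
Qed.

Lemma Troot : T root0.
Proof. destruct hTne as [eta Heta]. apply (hT root0 eta Heta (root_init eta)). Qed.

Lemma root_unique (rho : wseq ltW) : initseg rho root0 -> rho = root0.
Proof.
  intros [L E]. apply wseq_eq.
  - destruct L as [L|L]; auto. exfalso; exact (mW_min _ L).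
  - intros x p q. exfalso. destruct L as [L|L].
    + rewrite L in p. exact (mW_min _ p).
    + exact (mW_min _ L).
Qed.

Lemma pred_total (a b c : wseq ltW) : initseg a c -> initseg b c -> initseg a b \/ initseg b a.
Proof.
  intros [La Ea] [Lb Eb].
  assert (qa : forall x, ltW x (len a) -> ltW x (len c))
    by (intros x p; destruct La as [La|La]; [rewrite <- La; exact p|exact (trW _ _ _ p La)]).
  assert (qb : forall x, ltW x (len b) -> ltW x (len c))
    by (intros x p; destruct Lb as [Lb|Lb]; [rewrite <- Lb; exact p|exact (trW _ _ _ p Lb)]).
  destruct (totW (len a) (len b)) as [L|[L|L]].
  - left. split; [right; exact L|]. intros x p q.
    rewrite (Ea x p (qa x p)), (Eb x q (qa x p)). reflexivity.
  - left. split; [left; exact L|]. intros x p q.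
    rewrite (Ea x p (qa x p)), (Eb x q (qa x p)). reflexivity.
  - right. split; [right; exact L|]. intros x p q.
    rewrite (Ea x q (qb x p)), (Eb x p (qb x p)). reflexivity.
Qed.

Lemma pred_eq (a b c : wseq ltW) : initseg a c -> initseg b c -> len a = len b -> a = b.
Proof.
  intros [La Ea] [Lb Eb] E. apply wseq_eq; auto. intros x p q.
  assert (qc : ltW x (len c)) by (destruct La as [La|La]; [rewrite <- La; exact p|exact (trW _ _ _ p La)]).
  rewrite (Ea x p qc), (Eb x q qc). reflexivity.
Qed.

Definition lev_inj (a : W) := proj1_sig (constructive_indefinite_description _ (hlev a)).
Lemma lev_inj_inj a : forall x y, lev_inj a x = lev_inj a y -> x = y.
Proof. exact (proj2_sig (constructive_indefinite_description _ (hlev a))). Qed.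

Definition Lv (a : W) (eta : wseq ltW) : W :=
  match excluded_middle_informative (T eta /\ len eta = a) with
  | left p => lev_inj a (exist _ eta p)
  | right _ => a
  end.

Lemma TW : card_le {eta | T eta} W.
Proof.
  apply (cle_trans _ (W * W)); [|apply hessenberg; apply Winf].
  exists (fun x => (len (proj1_sig x), Lv (len (proj1_sig x)) (proj1_sig x))).
  intros [x Hx] [y Hy] E. simpl in E. injection E as E1 E2.
  rewrite <- E1 in E2. unfold Lv in E2.
  destruct (excluded_middle_informative (T x /\ len x = len x)) as [p|p]; [|tauto].
  destruct (excluded_middle_informative (T y /\ len y = len x)) as [q|q]; [|exfalso; apply q; split; auto].
  apply lev_inj_inj in E2. apply sval_inj. simpl.
  exact (f_equal (@proj1_sig _ _) E2).
Qed.

Definition jT := proj1_sig (constructive_indefinite_description _ TW).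
Lemma jT_inj : forall x y, jT x = jT y -> x = y.
Proof. exact (proj2_sig (constructive_indefinite_description _ TW)). Qed.

Definition e (g : W) : wseq ltW :=
  epsilon (inhabits root0) (fun eta => exists p : T eta, jT (exist _ eta p) = g).

Lemma e_surj eta : T eta -> exists g, e g = eta.
Proof.
  intros p. exists (jT (exist _ eta p)).
  assert (H := epsilon_spec (inhabits root0) (fun eta' => exists p' : T eta', jT (exist _ eta' p') = jT (exist _ eta p))
     (ex_intro _ eta (ex_intro _ p eq_refl))).
  fold (e (jT (exist _ eta p))) in H. destruct H as [p' H]. apply jT_inj in H.
  exact (f_equal (@proj1_sig _ _) H).
Qed.

Definition X := (option W * Kap)%type.

Record State := mkS {
  sP : X -> Prop;
  sf : forall F, (arF tau F -> X) -> X;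
  sr : forall R, (arR tau R -> X) -> Prop;
  sc : closedP tau sf sP;
  sH : wseq ltW -> Prop;
  sG : forall eta, car (M eta) -> X }.

Definition ssub (s : State) := sub tau (sf s) (sr s) (sP s) (sc s).

Lemma transport (P0 : X -> Prop) (f0 : forall F, (arF tau F -> X) -> X)
  (r0 : forall R, (arR tau R -> X) -> Prop) (N : structure tau)
  (iota : {x | P0 x} -> car N) (iinj : forall a b, iota a = iota b -> a = b)
  (c : car N -> Kap) (cinj : forall a b, c a = c b -> a = b)
  (col : option W) (hcol : forall x, P0 x -> fst x <> col) :
  exists (t : car N -> X) (P' : X -> Prop) f' r' (c' : closedP tau f' P'),
    (forall y, P' (t y)) /\ (forall z, P' z -> exists y, t y = z) /\
    (forall y y', t y = t y' -> y = y') /\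
    (forall x, t (iota x) = proj1_sig x) /\
    (forall y, (exists x, iota x = y) \/ fst (t y) = col) /\
    (forall F ys, f' F (fun k => t (ys k)) = t (fint N F ys)) /\
    (forall R ys, r' R (fun k => t (ys k)) <-> rint N R ys) /\
    (forall F zs, ~ (forall k, P' (zs k)) -> f' F zs = f0 F zs) /\
    (forall R zs, ~ (forall k, P' (zs k)) -> (r' R zs <-> r0 R zs)).
Proof.
  set (t := fun y => match excluded_middle_informative (exists x, iota x = y) with
       | left H => proj1_sig (proj1_sig (constructive_indefinite_description _ H))
       | right _ => (col, c y) end).
  assert (t_iota : forall x, t (iota x) = proj1_sig x).
  { intros x. unfold t. destruct (excluded_middle_informative _) as [H|H].
    - destruct (constructive_indefinite_description _ H) as [x' Hx']. simpl.
      apply iinj in Hx'. subst; reflexivity.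
    - exfalso; apply H; eauto. }
  assert (t_col : forall y, ~ (exists x, iota x = y) -> t y = (col, c y)).
  { intros y H. unfold t. destruct (excluded_middle_informative _); [contradiction|reflexivity]. }
  assert (t_inj : forall y y', t y = t y' -> y = y').
  { intros y y' E.
    destruct (classic (exists x, iota x = y)) as [[x <-]|H1];
    destruct (classic (exists x, iota x = y')) as [[x' <-]|H2].
    - rewrite !t_iota in E. f_equal. apply sval_inj; auto.
    - rewrite t_iota, (t_col _ H2) in E. exfalso. apply (hcol (proj1_sig x) (proj2_sig x)).
      rewrite E; reflexivity.
    - rewrite t_iota, (t_col _ H1) in E. exfalso. apply (hcol (proj1_sig x') (proj2_sig x')).
      rewrite <- E; reflexivity.
    - rewrite (t_col _ H1), (t_col _ H2) in E. injection E as E. apply cinj; auto. }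
  set (P' := fun z => exists y, t y = z).
  set (f' := fun F (zs : arF tau F -> X) => match excluded_middle_informative (forall k, P' (zs k)) with
       | left H => t (fint N F (fun k => proj1_sig (constructive_indefinite_description _ (H k))))
       | right _ => f0 F zs end).
  set (r' := fun R (zs : arR tau R -> X) => match excluded_middle_informative (forall k, P' (zs k)) with
       | left H => rint N R (fun k => proj1_sig (constructive_indefinite_description _ (H k)))
       | right _ => r0 R zs end).
  assert (c' : closedP tau f' P').
  { intros F zs H. unfold f'. destruct (excluded_middle_informative _); [eexists; reflexivity|contradiction]. }
  exists t, P', f', r', c'.
  split; [intros y; exists y; reflexivity|].
  split; [intros z Hz; exact Hz|].
  split; [exact t_inj|].
  split; [exact t_iota|].
  split; [intros y; destruct (classic (exists x, iota x = y)) as [H|H]; [left; exact H|right; rewrite t_col; auto]|].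
  split.
  { intros F ys. unfold f'. destruct (excluded_middle_informative _) as [H|H].
    - f_equal. f_equal. apply functional_extensionality; intros k.
      destruct (constructive_indefinite_description _ (H k)) as [y Hy]. simpl. apply t_inj; auto.
    - exfalso; apply H. intros k; exists (ys k); reflexivity. }
  split.
  { intros R ys. unfold r'. destruct (excluded_middle_informative _) as [H|H].
    - match goal with |- rint N R ?a <-> _ => replace a with ys; [tauto|] end.
      apply functional_extensionality; intros k.
      destruct (constructive_indefinite_description _ (H k)) as [y Hy]. simpl. apply t_inj; auto.
    - exfalso; apply H. intros k; exists (ys k); reflexivity. }
  split.
  { intros F zs H. unfold f'. destruct (excluded_middle_informative _); [contradiction|reflexivity]. }
  { intros R zs H. unfold r'. destruct (excluded_middle_informative _); [contradiction|tauto]. }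
Qed.

Lemma transport_iso (N : structure tau) (t : car N -> X) (P' : X -> Prop) f' r' (c' : closedP tau f' P')
  (Ht : forall y, P' (t y)) (Hs : forall z, P' z -> exists y, t y = z)
  (Hi : forall y y', t y = t y' -> y = y')
  (hf : forall F ys, f' F (fun k => t (ys k)) = t (fint N F ys))
  (hr : forall R ys, r' R (fun k => t (ys k)) <-> rint N R ys) :
  is_iso N (sub tau f' r' P' c') (fun y => exist _ (t y) (Ht y)).
Proof.
  split; [split; [|split]|].
  - intros y y' E. apply Hi. exact (f_equal (@proj1_sig _ _) E).
  - intros F ys. apply sval_inj. simpl. rewrite hf. reflexivity.
  - intros R ys. simpl. rewrite hr. tauto.
  - intros [z Hz]. destruct (Hs z Hz) as [y Hy]. exists y. apply sval_inj. simpl. exact Hy.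
Qed.

Lemma id_iso (A : structure tau) : is_iso A A (fun x => x).
Proof.
  split; [split; [|split]|]; auto.
  - intros R xs. tauto.
  - intros y; exists y; auto.
Qed.

Lemma iso_card (A B : structure tau) f : is_iso A B f -> card_eq (car A) Kap -> card_eq (car B) Kap.
Proof.
  intros Hf HA. destruct (iso_inv tau A B f Hf) as [g [Hg _]].
  apply CB.
  - apply (cle_trans _ (car A)); [|apply ceq_le; auto]. exists g. apply (emb_inj tau _ _ g). apply Hg.
  - apply (cle_trans _ (car A)); [apply ceq_ge; auto|]. exists f. apply (emb_inj tau _ _ f). apply Hf.
Qed.

Lemma ceq_inh (A : Type) : card_eq A Kap -> inhabited A.
Proof. intros [f [_ Hs]]. destruct (Hs k0) as [a _]. exact (inhabits a). Qed.

Lemma M_inh rho : T rho -> inhabited (car (M rho)).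
Proof. intros H. apply ceq_inh. apply (hM rho H). Qed.

Definition InclLe (s t : State) : Prop :=
  (forall x, sP s x -> sP t x) /\ agree tau (sf s) (sf t) (sr s) (sr t) (sP s) /\
  exists g : car (ssub s) -> car (ssub t), leK K (ssub s) (ssub t) g /\
     forall x, proj1_sig (g x) = proj1_sig x.

Definition HExt (s t : State) : Prop :=
  (forall eta, sH s eta -> sH t eta) /\ (forall eta, sH s eta -> sG s eta = sG t eta).

Definition LeMap (st : State) (eta : wseq ltW) : Prop :=
  exists g : car (M eta) -> car (ssub st), leK K (M eta) (ssub st) g /\
     forall x, proj1_sig (g x) = sG st eta x.

Definition Core (st : State) : Prop :=
  sH st root0 /\ (forall eta, sH st eta -> T eta) /\
  (forall eta nu, sH st nu -> T eta -> initseg eta nu -> sH st eta) /\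
  (forall eta, sH st eta -> LeMap st eta) /\
  (forall eta nu, sH st eta -> sH st nu -> initseg eta nu ->
     forall x, sG st nu (h eta nu x) = sG st eta x).

Lemma InclLe_refl s : inK K (ssub s) -> InclLe s s.
Proof.
  intros H. split; [auto|split].
  - split; [auto|]. intros; tauto.
  - exists (fun x => x). split; auto. apply leK_iso; auto. apply id_iso.
Qed.

Lemma InclLe_trans s t u : InclLe s t -> InclLe t u -> InclLe s u.
Proof.
  intros [H1 [[A1 B1] [g1 [L1 V1]]]] [H2 [[A2 B2] [g2 [L2 V2]]]].
  split; [auto|split; [split|]].
  - intros F xs Hx. rewrite A1, A2; auto.
  - intros R xs Hx. rewrite B1, B2; auto; tauto.
  - exists (fun x => g2 (g1 x)). split.
    + apply (leK_comp tau K _ _ _ g1 g2); auto.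
    + intros x. rewrite V2, V1. reflexivity.
Qed.

Lemma HExt_refl s : HExt s s. Proof. split; auto. Qed.
Lemma HExt_trans s t u : HExt s t -> HExt t u -> HExt s u.
Proof. intros [A1 B1] [A2 B2]. split; auto. intros eta H. rewrite B1, B2; auto. Qed.

Lemma LeMap_incl s t eta : LeMap s eta -> InclLe s t -> sG s eta = sG t eta -> LeMap t eta.
Proof.
  intros [g [L V]] [_ [_ [g' [L' V']]]] E. exists (fun x => g' (g x)). split.
  - apply (leK_comp tau K _ _ _ g g'); auto.
  - intros x. rewrite V', V, E. reflexivity.
Qed.

Lemma base_exists : exists st, K_card K Kap (ssub st) /\ Core st /\ (forall x, sP st x -> fst x = None).
Proof.
  destruct (hM root0 Troot) as [HK HC].
  destruct HC as [c [cinj _]].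
  destruct (transport (fun _ => False) (fun F xs => (None, k0)) (fun _ _ => False) (M root0)
     (fun x => False_rect _ (proj2_sig x)) (fun a _ _ => False_rect _ (proj2_sig a)) c cinj None
     (fun x H => False_rect _ H))
    as [t [P' [f' [r' [c' [Ht [Hs [Hi [_ [Hcol [hf [hr _]]]]]]]]]]]].
  set (st := mkS P' f' r' c' (fun rho => rho = root0) (fun rho x => t (h rho root0 x))).
  assert (iso := transport_iso _ t P' f' r' c' Ht Hs Hi hf hr).
  assert (inKs : inK K (ssub st)) by (eapply (inK_iso tau K); eauto).
  exists st. split; [split; [exact inKs|]|split].
  - eapply iso_card; eauto. apply (hM root0 Troot).
  - split; [reflexivity|split; [|split; [|split]]].
    + intros eta ->. exact Troot.
    + intros eta nu -> _ I. apply root_unique; auto.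
    + intros eta ->. exists (fun x => exist _ (t (h root0 root0 x)) (Ht _)). split; [|reflexivity].
      apply (leK_ext tau K (M root0) (ssub st) (fun y => exist _ (t y) (Ht y))).
      * apply leK_iso; auto.
      * intros x. apply sval_inj. simpl. rewrite hid; auto. apply Troot.
    + intros eta nu E1 E2 _ x. simpl in E1, E2. subst. simpl. rewrite (hid root0 Troot). reflexivity.
  - intros x Hx. destruct (Hs x Hx) as [y <-]. destruct (Hcol y) as [[[z Hz] _]|E]; [contradiction|exact E].
Qed.

Lemma img_leK (A E N : structure tau) (k : car A -> car E) (emb : is_embedding A E k)
  (inKA : inK K A) (Q : car E -> Prop) (c : closedP tau (fint E) Q)
  (HQ : forall y, Q y <-> exists x, k x = y) (psi : car E -> car N) :
  leK K A N (fun x => psi (k x)) ->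
  leK K (sub tau (fint E) (rint E) Q c) N (fun y => psi (proj1_sig y)).
Proof.
  intros Hl.
  set (j := fun x => exist Q (k x) (proj2 (HQ _) (ex_intro _ x eq_refl))).
  assert (iso : is_iso A (sub tau (fint E) (rint E) Q c) j).
  { destruct emb as [Hi [Hf Hr]]. split; [split; [|split]|].
    - intros x y E'. apply Hi. exact (f_equal (@proj1_sig _ _) E').
    - intros F xs. apply sval_inj. simpl. apply Hf.
    - intros R xs. simpl. apply Hr.
    - intros y. destruct (proj1 (HQ _) (proj2_sig y)) as [x Hx]. exists x. apply sval_inj. exact Hx. }
  assert (inKQ : inK K (sub tau (fint E) (rint E) Q c)) by (eapply (inK_iso tau K); eauto).
  destruct (iso_leK_inv tau K A (sub tau (fint E) (rint E) Q c) j inKQ iso) as [g [Lg [_ Hjg]]].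
  apply (leK_ext tau K _ _ (fun y => psi (k (g y)))).
  - apply (leK_comp tau K _ _ _ g (fun x => psi (k x))); auto.
  - intros y. f_equal. rewrite <- (Hjg y) at 2. reflexivity.
Qed.

Lemma h_to_eta (eta : wseq ltW) rho : T rho -> T eta -> (initseg rho eta \/ rho = eta) ->
  leK K (M rho) (M eta) (h rho eta).
Proof.
  intros Tr Te [I| ->].
  - apply hh; auto.
  - apply (leK_ext tau K _ _ (fun x => x)).
    + apply leK_iso; [apply hM; auto|apply id_iso].
    + intros x; rewrite hid; auto.
Qed.

Lemma h_comp_eta (eta rho nu : wseq ltW) x : T rho -> T nu -> T eta -> (initseg nu eta \/ nu = eta) ->
  initseg rho nu -> h nu eta (h rho nu x) = h rho eta x.
Proof.
  intros Tr Tn Te [I| ->] J.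
  - apply hcomp; auto.
  - apply hid; auto.
Qed.

Lemma step_exists (st0 : State) (beta : W) (eta : wseq ltW) :
  K_card K Kap (ssub st0) -> Core st0 -> (forall x, sP st0 x -> fst x <> Some beta) ->
  T eta -> ~ sH st0 eta ->
  exists st, K_card K Kap (ssub st) /\ InclLe st0 st /\ HExt st0 st /\ Core st /\ sH st eta /\
    (forall x, sP st x -> sP st0 x \/ fst x = Some beta).
Proof.
  intros [K0 C0] [Hr0 [HT0 [Hd0 [HL0 Hc0]]]] Hcol0 Te Hne.
  set (B := fun rho => sH st0 rho /\ initseg rho eta).
  set (E := M eta).
  set (I := {rho | B rho}).
  set (ltI := fun a b : I => ltW (len (proj1_sig a)) (len (proj1_sig b))).
  assert (BT : forall rho, B rho -> T rho) by (intros rho [H _]; auto).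
  assert (woI : well_order ltI).
  { split; [|split].
    - apply (wf_inverse_image _ _ ltW (fun a : I => len (proj1_sig a)) wfW).
    - intros a b c; apply trW.
    - intros a b. destruct (totW (len (proj1_sig a)) (len (proj1_sig b))) as [L|[L|L]]; auto.
      right; left. apply sval_inj. apply (pred_eq _ _ eta); auto; [exact (proj2 (proj2_sig a))|exact (proj2 (proj2_sig b))]. }
  assert (inhI : inhabited I) by (exact (inhabits (exist _ root0 (conj Hr0 (root_init eta))))).
  set (Q := fun (a : I) (y : car E) => exists x, h (proj1_sig a) eta x = y).
  assert (embI : forall a : I, is_embedding (M (proj1_sig a)) E (h (proj1_sig a) eta)).
  { intros a. apply (leK_emb tau K). apply hh; auto; [apply BT, (proj2_sig a)|exact (proj2 (proj2_sig a))]. }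
  assert (cQ : forall a, closedP tau (fint E) (Q a)).
  { intros a F xs Hx.
    exists (fint (M (proj1_sig a)) F (fun k => proj1_sig (constructive_indefinite_description _ (Hx k)))).
    destruct (embI a) as [_ [Hf _]]. rewrite Hf. f_equal. apply functional_extensionality; intros k.
    destruct (constructive_indefinite_description _ (Hx k)); auto. }
  assert (neQ : forall a, exists y, Q a y).
  { intros a. destruct (M_inh _ (BT _ (proj2_sig a))) as [x]. exists (h _ eta x), x; reflexivity. }
  assert (initI : forall a b : I, ltI a b -> initseg (proj1_sig a) (proj1_sig b)).
  { intros a b L. destruct (pred_total (proj1_sig a) (proj1_sig b) eta (proj2 (proj2_sig a)) (proj2 (proj2_sig b))) as [H|[[H|H] _]]; auto.
    - exfalso. unfold ltI in L. rewrite H in L. exact (irrW _ L).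
    - exfalso. exact (asymW _ _ L H). }
  assert (monoQ : forall a b, ltI a b -> forall y, Q a y -> Q b y).
  { intros a b L y [x <-]. exists (h _ _ x). apply hcomp; auto.
    - apply BT, (proj2_sig a). - apply BT, (proj2_sig b). - exact (proj2 (proj2_sig b)). }
  set (Qu := fun y => exists a, Q a y).
  assert (cu : closedP tau (fint E) Qu).
  { apply (closedP_iff tau _ (fun y => exists a, True /\ Q a y)).
    - apply (closed_union tau ltI (proj2 (proj2 woI)) (fun _ => True)); auto.
      destruct inhI as [a]; exists a; auto.
    - intros y; split; [intros [a [_ H]]; exists a; auto|intros [a H]; exists a; auto]. }
  assert (inh0 : inhabited (car (ssub st0))) by (apply ceq_inh; exact C0).
  set (phi := fun y : car E => epsilon inh0 (fun z : car (ssub st0) =>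
         exists rho x, B rho /\ h rho eta x = y /\ proj1_sig z = sG st0 rho x)).
  assert (embB : forall rho, B rho -> is_embedding (M rho) E (h rho eta)).
  { intros rho Br. apply (leK_emb tau K). apply hh; auto. exact (proj2 Br). }
  assert (phi_spec : forall rho x, B rho -> proj1_sig (phi (h rho eta x)) = sG st0 rho x).
  { intros rho x Br.
    destruct (HL0 rho (proj1 Br)) as [g [Lg Vg]].
    assert (Hex : exists z : car (ssub st0), exists rho' x', B rho' /\ h rho' eta x' = h rho eta x /\
                    proj1_sig z = sG st0 rho' x').
    { exists (g x), rho, x. split; auto. }
    destruct (epsilon_spec inh0 _ Hex) as [rho' [x' [Br' [Eh Ez]]]].
    unfold phi. rewrite Ez.
    destruct (pred_total rho rho' eta (proj2 Br) (proj2 Br')) as [J|J].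
    - rewrite <- (hcomp rho rho' eta) in Eh; auto; [|exact (proj2 Br')].
      apply (emb_inj tau _ _ _ (embB rho' Br')) in Eh. subst x'.
      apply Hc0; auto; [exact (proj1 Br)|exact (proj1 Br')].
    - rewrite <- (hcomp rho' rho eta) in Eh; auto; [|exact (proj2 Br)].
      apply (emb_inj tau _ _ _ (embB rho Br)) in Eh. subst x.
      symmetry. apply Hc0; auto; [exact (proj1 Br')|exact (proj1 Br)]. }
  assert (HphiE : forall a : I, leK K (sub tau (fint E) (rint E) (Q a) (cQ a)) E (fun y => proj1_sig y)).
  { intros a. apply (img_leK (M (proj1_sig a)) E E (h (proj1_sig a) eta) (embI a)) with (psi := fun y => y).
    - apply hM, BT, (proj2_sig a).
    - intros y; tauto.
    - apply hh; auto; [apply BT, (proj2_sig a)|exact (proj2 (proj2_sig a))]. }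
  assert (Hphi0 : forall a : I, leK K (sub tau (fint E) (rint E) (Q a) (cQ a)) (ssub st0) (fun y => phi (proj1_sig y))).
  { intros a. apply (img_leK (M (proj1_sig a)) E (ssub st0) (h (proj1_sig a) eta) (embI a)).
    - apply hM, BT, (proj2_sig a).
    - intros y; tauto.
    - destruct (HL0 (proj1_sig a) (proj1 (proj2_sig a))) as [g [Lg Vg]].
      apply (leK_ext tau K _ _ g); auto. intros x. apply sval_inj. rewrite Vg, phi_spec; auto.
      exact (proj2_sig a). }
  destruct (NCU tau K (fint E) (rint E) ltI woI inhI Q cQ neQ monoQ E (fun y => y) HphiE Qu cu
              (fun y => iff_refl _)) as [inKu LuE].
  destruct (NCU tau K (fint E) (rint E) ltI woI inhI Q cQ neQ monoQ (ssub st0) phi Hphi0 Qu cu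
              (fun y => iff_refl _)) as [_ Lu0].
  set (Mu := sub tau (fint E) (rint E) Qu cu).
  assert (KcE : K_card K Kap E) by exact (hM eta Te).
  assert (Kcu : K_card K Kap Mu).
  { split; auto. apply CB.
    - apply (cle_trans _ (car E)); [|apply ceq_le, (proj2 (hM eta Te))].
      exists (fun y : car Mu => proj1_sig y). intros a b; apply sval_inj.
    - apply (cle_trans _ (car (M root0))); [apply ceq_ge, (proj2 (hM root0 Troot))|].
      exists (fun x => exist Qu (h root0 eta x)
                (ex_intro _ (exist _ root0 (conj Hr0 (root_init eta))) (ex_intro _ x eq_refl))).
      intros x y Exy. apply (emb_inj tau _ _ _ (embB root0 (conj Hr0 (root_init eta)))).
      exact (f_equal (@proj1_sig _ _) Exy). }
  destruct (hAP Mu (ssub st0) E (fun y => phi (proj1_sig y)) (fun y => proj1_sig y) Kcu (conj K0 C0) KcE Lu0 LuE)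
    as [N [f1 [f2 [KN [Lf1 [Lf2 Hcomm]]]]]].
  assert (KN' := KN). destruct KN' as [inKN [cN [cNinj _]]].
  assert (f1inj := emb_inj tau _ _ _ (leK_emb tau K _ _ _ Lf1)).
  destruct (transport (sP st0) (sf st0) (sr st0) N f1 f1inj cN cNinj (Some beta) Hcol0)
    as [t [P' [f' [r' [c' [Ht [Hs [Hi [Hti [Hcol [hf [hr [hf0 hr0]]]]]]]]]]]]].
  set (H' := fun rho => sH st0 rho \/ (T rho /\ initseg rho eta) \/ rho = eta).
  set (G' := fun rho (x : car (M rho)) => if excluded_middle_informative (sH st0 rho) then sG st0 rho x
                                          else t (f2 (h rho eta x))).
  set (st := mkS P' f' r' c' H' G').
  assert (iso := transport_iso N t P' f' r' c' Ht Hs Hi hf hr).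
  assert (inKs : inK K (ssub st)) by (eapply (inK_iso tau K); eauto).
  assert (Ltau : leK K N (ssub st) (fun y => exist _ (t y) (Ht y))) by (apply leK_iso; auto).
  assert (Kcs : K_card K Kap (ssub st)).
  { split; auto. eapply iso_card; eauto. exact (proj2 KN). }
  destruct (leK_emb tau K _ _ _ Lf1) as [_ [Hf1 Hr1]].
  assert (Hincl : InclLe st0 st).
  { split; [|split; [split|]].
    - intros x Hx. assert (E0 := Hti (exist _ x Hx)). simpl in E0. rewrite <- E0. apply Ht.
    - intros F zs Hz.
      set (xs := fun k => exist (sP st0) (zs k) (Hz k)).
      assert (E1 : f' F zs = f' F (fun k => t (f1 (xs k)))).
      { f_equal. apply functional_extensionality; intros k. rewrite Hti. reflexivity. }
      simpl. rewrite E1, hf, <- Hf1, Hti. reflexivity.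
    - intros R zs Hz.
      set (xs := fun k => exist (sP st0) (zs k) (Hz k)).
      assert (E1 : r' R zs = r' R (fun k => t (f1 (xs k)))).
      { f_equal. apply functional_extensionality; intros k. rewrite Hti. reflexivity. }
      simpl. rewrite E1, hr, <- Hr1. simpl. tauto.
    - exists (fun x => exist _ (t (f1 x)) (Ht _)). split.
      + apply (leK_comp tau K (ssub st0) N (ssub st) f1 (fun y => exist _ (t y) (Ht y))); auto.
      + intros x. simpl. apply Hti. }
  assert (Hext : HExt st0 st).
  { split.
    - intros rho Hr; left; auto.
    - intros rho Hr. apply functional_extensionality; intros x. simpl. unfold G'.
      destruct (excluded_middle_informative _); [reflexivity|contradiction]. }
  assert (KEY : forall rho x, B rho -> t (f2 (h rho eta x)) = sG st0 rho x).
  { intros rho x Br.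
    assert (Hy : Qu (h rho eta x)) by (exists (exist _ rho Br), x; reflexivity).
    assert (E1 := Hcomm (exist _ (h rho eta x) Hy)). simpl in E1.
    rewrite <- E1, Hti. apply phi_spec; auto. }
  assert (HT' : forall rho, H' rho -> T rho).
  { intros rho [H|[[H _]| ->]]; auto. }
  exists st. split; [exact Kcs|split; [exact Hincl|split; [exact Hext|split; [|split]]]].
  - split; [left; exact Hr0|split; [exact HT'|split; [|split]]].
    + intros rho nu Hn Tr J. destruct Hn as [Hn|[[Tn Jn]| ->]].
      * left. apply (Hd0 rho nu); auto.
      * right; left. split; auto. apply (initseg_trans _ nu); auto.
      * right; left; auto.
    + intros rho Hr. destruct (classic (sH st0 rho)) as [H0|H0].
      * apply (LeMap_incl st0 st rho); auto. apply Hext; auto.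
      * assert (Tr : T rho) by (apply HT'; auto).
        assert (J : initseg rho eta \/ rho = eta).
        { destruct Hr as [Hr|[[_ Hr]|Hr]]; [contradiction|left; auto|right; auto]. }
        exists (fun x => exist _ (t (f2 (h rho eta x))) (Ht _)). split.
        -- apply (leK_comp tau K (M rho) E (ssub st) (h rho eta) (fun z => exist _ (t (f2 z)) (Ht _))).
           ++ apply h_to_eta; auto.
           ++ apply (leK_comp tau K E N (ssub st) f2 (fun y => exist _ (t y) (Ht y))); auto.
        -- intros x. simpl. unfold G'. destruct (excluded_middle_informative (sH st0 rho)); [contradiction|reflexivity].
    + intros rho nu Hr Hn J x. simpl. unfold G'.
      assert (Tr : T rho) by (apply HT'; auto).
      assert (Tn : T nu) by (apply HT'; auto).
      destruct (classic (sH st0 nu)) as [N0|N0].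
      * assert (R0 : sH st0 rho) by (apply (Hd0 rho nu); auto).
        destruct (excluded_middle_informative (sH st0 nu)); [|contradiction].
        destruct (excluded_middle_informative (sH st0 rho)); [|contradiction].
        apply Hc0; auto.
      * destruct (excluded_middle_informative (sH st0 nu)) as [|_]; [contradiction|].
        assert (Jn : initseg nu eta \/ nu = eta).
        { destruct Hn as [Hn|[[_ Hn]|Hn]]; [contradiction|left; auto|right; auto]. }
        rewrite (h_comp_eta eta rho nu x Tr Tn Te Jn J).
        destruct (excluded_middle_informative (sH st0 rho)) as [R0|R0]; [|reflexivity].
        apply KEY. split; auto.
        destruct Jn as [Jn| ->]; [apply (initseg_trans _ nu); auto|exact J].
  - right; right; reflexivity.
  - intros z Hz. destruct (Hs z Hz) as [y <-]. destruct (Hcol y) as [[x <-]|Hc].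
    + left. rewrite Hti. exact (proj2_sig x).
    + right. exact Hc.
Qed.

Lemma agree_refl {Y} f r (P : Y -> Prop) : agree tau f f r r P.
Proof. split; intros; [reflexivity|tauto]. Qed.

Lemma closedP_agree {Y} f f' r r' (P : Y -> Prop) : closedP tau f P -> agree tau f f' r r' P -> closedP tau f' P.
Proof. intros c [A _] F xs H. rewrite <- A; auto. Qed.

Lemma agree_sym {Y} f f' r r' (P : Y -> Prop) : agree tau f f' r r' P -> agree tau f' f r' r P.
Proof. intros [A B]. split; intros; [symmetry; auto|rewrite B; auto; tauto]. Qed.

Section Join.
Variables (D : W -> Prop) (S : W -> State) (Dne : exists g, D g)
  (Ddown : forall g d, ltW g d -> D d -> D g)
  (Hk : forall g, D g -> K_card K Kap (ssub (S g)))
  (Hinc : forall g d, D d -> ltW g d -> InclLe (S g) (S d) /\ HExt (S g) (S d))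
  (Hcont : forall d, D d -> is_limit ltW d -> forall x, sP (S d) x -> exists g, ltW g d /\ sP (S g) x)
  (Hcore : forall g, D g -> Core (S g)).

Definition Dle (g m : W) := g = m \/ ltW g m.

Lemma D_max g d : D g -> D d -> exists m, D m /\ Dle g m /\ Dle d m.
Proof.
  intros Dg Dd. destruct (totW g d) as [L|[E|L]].
  - exists d; unfold Dle; auto.
  - subst; exists d; unfold Dle; auto.
  - exists g; unfold Dle; auto.
Qed.

Lemma Dle_props g m : D m -> Dle g m ->
  (forall x, sP (S g) x -> sP (S m) x) /\ agree tau (sf (S g)) (sf (S m)) (sr (S g)) (sr (S m)) (sP (S g)) /\
  HExt (S g) (S m).
Proof.
  intros Dm [<-|L].
  - split; [auto|split; [apply agree_refl|apply HExt_refl]].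
  - destruct (Hinc g m Dm L) as [[A [B _]] C]. auto.
Qed.

Definition x0 : X := (None, k0).

Definition Pj (x : X) := exists g, D g /\ sP (S g) x.

Definition fj F (xs : arF tau F -> X) : X :=
  match excluded_middle_informative (exists g, D g /\ forall k, sP (S g) (xs k)) with
  | left H => sf (S (proj1_sig (constructive_indefinite_description _ H))) F xs
  | right _ => x0 end.

Definition rj R (xs : arR tau R -> X) : Prop :=
  match excluded_middle_informative (exists g, D g /\ forall k, sP (S g) (xs k)) with
  | left H => sr (S (proj1_sig (constructive_indefinite_description _ H))) R xs
  | right _ => False end.

Definition Hj (eta : wseq ltW) := exists g, D g /\ sH (S g) eta.

Definition Gj (eta : wseq ltW) : car (M eta) -> X :=
  match excluded_middle_informative (exists g, D g /\ sH (S g) eta) with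
  | left H => sG (S (proj1_sig (constructive_indefinite_description _ H))) eta
  | right _ => fun _ => x0 end.

Lemma fj_agree g : D g -> agree tau (sf (S g)) fj (sr (S g)) rj (sP (S g)).
Proof.
  intros Dg. split.
  - intros F xs Hx. unfold fj. destruct (excluded_middle_informative _) as [H|H].
    + destruct (constructive_indefinite_description _ H) as [g1 [Dg1 H1]]. simpl.
      destruct (D_max g g1 Dg Dg1) as [m [Dm [L1 L2]]].
      destruct (Dle_props g m Dm L1) as [_ [[A _] _]].
      destruct (Dle_props g1 m Dm L2) as [_ [[A' _] _]].
      rewrite A, A'; auto.
    + exfalso; apply H; eauto.
  - intros R xs Hx. unfold rj. destruct (excluded_middle_informative _) as [H|H].
    + destruct (constructive_indefinite_description _ H) as [g1 [Dg1 H1]]. simpl.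
      destruct (D_max g g1 Dg Dg1) as [m [Dm [L1 L2]]].
      destruct (Dle_props g m Dm L1) as [_ [[_ B] _]].
      destruct (Dle_props g1 m Dm L2) as [_ [[_ B'] _]].
      rewrite B, B'; auto; tauto.
    + exfalso; apply H; eauto.
Qed.

Lemma Gj_agree g eta : D g -> sH (S g) eta -> Gj eta = sG (S g) eta.
Proof.
  intros Dg Hg. unfold Gj. destruct (excluded_middle_informative _) as [H|H].
  - destruct (constructive_indefinite_description _ H) as [g1 [Dg1 H1]]. simpl.
    destruct (D_max g g1 Dg Dg1) as [m [Dm [L1 L2]]].
    destruct (Dle_props g m Dm L1) as [_ [_ [_ E]]].
    destruct (Dle_props g1 m Dm L2) as [_ [_ [_ E']]].
    rewrite E, E'; auto.
  - exfalso; apply H; eauto.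
Qed.

Lemma D_mono g d : ltW g d -> D d -> forall x, sP (S g) x -> sP (S d) x.
Proof. intros L Dd. apply (Hinc g d Dd L). Qed.

Lemma cj : closedP tau fj Pj.
Proof.
  intros F xs Hx.
  destruct (common_index ltW totW D Dne (fun g x => exists g', D g' /\ Dle g' g /\ sP (S g') x)) with (xs := xs) as [g [Dg Hg]].
  - intros i j L x [g' [Dg' [Lg' H']]]. exists g'. split; [auto|split; [|auto]].
    right. destruct Lg' as [<-|Lg']; [exact L|exact (trW _ _ _ Lg' L)].
  - intros k. destruct (Hx k) as [g [Dg Hg]]. exists g; split; auto. exists g; split; [auto|split; [left; auto|auto]].
  - assert (Hg' : forall k, sP (S g) (xs k)).
    { intros k. destruct (Hg k) as [g' [Dg' [Lg' H']]]. apply (Dle_props g' g Dg Lg'); auto. }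
    exists g; split; auto. rewrite <- (proj1 (fj_agree g Dg)); [|exact Hg'].
    apply (sc (S g)). exact Hg'.
Qed.

Definition Sj : State := mkS Pj fj rj cj Hj Gj.

Lemma join_exists :
  inK K (ssub Sj) /\ (forall g, D g -> InclLe (S g) Sj /\ HExt (S g) Sj) /\ Core Sj.
Proof.
  set (I := {g | D g}).
  set (lt' := fun a b : I => ltW (proj1_sig a) (proj1_sig b)).
  assert (wo' : well_order lt') by (apply restrict_wo; exact woW).
  assert (inh' : inhabited I) by (destruct Dne as [g Dg]; exact (inhabits (exist _ g Dg))).
  set (Q := fun a : I => sP (S (proj1_sig a))).
  assert (cQ : forall a, closedP tau fj (Q a)).
  { intros a. apply (closedP_agree (sf (S (proj1_sig a))) fj (sr (S (proj1_sig a))) rj).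
    - apply sc. - apply fj_agree. exact (proj2_sig a). }
  assert (isoa : forall a : I, is_iso (ssub (S (proj1_sig a))) (sub tau fj rj (Q a) (cQ a)) (fun x => x)).
  { intros a. apply sub_iso_agree. apply fj_agree. exact (proj2_sig a). }
  assert (isob : forall a : I, is_iso (sub tau fj rj (Q a) (cQ a)) (ssub (S (proj1_sig a))) (fun x => x)).
  { intros a. apply sub_iso_agree. apply agree_sym, fj_agree. exact (proj2_sig a). }
  assert (inKa : forall a : I, inK K (sub tau fj rj (Q a) (cQ a))).
  { intros a. eapply (inK_iso tau K); [|apply isoa]. apply Hk. exact (proj2_sig a). }
  assert (Hu : forall y, Pj y <-> exists a : I, Q a y).
  { intros y; split.
    - intros [g [Dg H]]. exists (exist _ g Dg). exact H.
    - intros [a H]. exists (proj1_sig a). split; [exact (proj2_sig a)|exact H]. }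
  destruct (CCU tau K fj rj lt' wo' inh' Q cQ) with (Qu := Pj) (cu := cj) as [H1 [H2 _]].
  - intros a. destruct (ceq_inh _ (proj2 (Hk _ (proj2_sig a)))) as [[y Hy]]. exists y; exact Hy.
  - intros a b L. apply (D_mono _ _ L). exact (proj2_sig b).
  - exact inKa.
  - intros a b L. destruct (Hinc _ _ (proj2_sig b) L) as [[_ [_ [g [Lg Vg]]]] _].
    exists g. split; [|exact Vg].
    apply (leK_comp tau K (sub tau fj rj (Q a) (cQ a)) (ssub (S (proj1_sig a))) (sub tau fj rj (Q b) (cQ b)) (fun x => x) (fun x => g x)).
    + apply leK_iso; auto.
    + apply (leK_comp tau K (ssub (S (proj1_sig a))) (ssub (S (proj1_sig b))) (sub tau fj rj (Q b) (cQ b)) g (fun x => x)); auto.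
      apply leK_iso; [apply Hk; exact (proj2_sig b)|apply isoa].
  - intros j lj y Hy.
    assert (lj' : is_limit ltW (proj1_sig j)).
    { destruct lj as [[a La] lj]. split; [exists (proj1_sig a); exact La|].
      intros k Lk. assert (Dk : D k) by (apply (Ddown k (proj1_sig j) Lk); exact (proj2_sig j)).
      destruct (lj (exist _ k Dk) Lk) as [b [L1 L2]]. exists (proj1_sig b); auto. }
    destruct (Hcont _ (proj2_sig j) lj' y Hy) as [g [Lg Hg]].
    assert (Dg : D g) by (apply (Ddown g (proj1_sig j) Lg); exact (proj2_sig j)).
    exists (exist _ g Dg). split; auto.
  - exact Hu.
  - split; [exact H1|split].
    + intros g Dg. split; [split; [|split]|].
      * intros x Hx. exists g; auto.
      * apply fj_agree; auto.
      * destruct (H2 (exist _ g Dg)) as [g' [Lg' Vg']]. exists g'. split; [|exact Vg'].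
        apply (leK_comp tau K (ssub (S g)) (sub tau fj rj (Q (exist _ g Dg)) (cQ _)) (ssub Sj) (fun x => x) g'); auto.
        apply leK_iso; [apply Hk; auto|apply (isoa (exist _ g Dg))].
      * split.
        -- intros eta He. exists g; auto.
        -- intros eta He. simpl. symmetry. apply Gj_agree; auto.
    + destruct Dne as [g0 Dg0].
      assert (LeS : forall g, D g -> InclLe (S g) Sj).
      { intros g Dg. split; [|split].
        - intros x Hx. exists g; auto.
        - apply fj_agree; auto.
        - destruct (H2 (exist _ g Dg)) as [g' [Lg' Vg']]. exists g'. split; [|exact Vg'].
          apply (leK_comp tau K (ssub (S g)) (sub tau fj rj (Q (exist _ g Dg)) (cQ _)) (ssub Sj) (fun x => x) g'); auto.
          apply leK_iso; [apply Hk; auto|apply (isoa (exist _ g Dg))]. }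
      split; [|split; [|split; [|split]]].
      * exists g0. split; auto. exact (proj1 (Hcore g0 Dg0)).
      * intros eta [g [Dg Hg]]. destruct (Hcore g Dg) as [_ [HT' _]]; auto.
      * intros eta nu [g [Dg Hg]] Te J. exists g. split; auto. destruct (Hcore g Dg) as [_ [_ [Hd' _]]]. apply (Hd' eta nu); auto.
      * intros eta [g [Dg Hg]]. apply (LeMap_incl (S g) Sj eta).
        -- destruct (Hcore g Dg) as [_ [_ [_ [HL' _]]]]; auto.
        -- apply LeS; auto.
        -- simpl. symmetry. apply Gj_agree; auto.
      * intros eta nu [g [Dg Hg]] [d [Dd Hd]] J x. simpl.
        destruct (D_max g d Dg Dd) as [m [Dm [L1 L2]]].
        destruct (Dle_props g m Dm L1) as [_ [_ [E1 _]]].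
        destruct (Dle_props d m Dm L2) as [_ [_ [E2 _]]].
        rewrite (Gj_agree m eta Dm (E1 _ Hg)), (Gj_agree m nu Dm (E2 _ Hd)).
        destruct (Hcore m Dm) as [_ [_ [_ [_ Hc']]]]. apply Hc'; auto.
Qed.

End Join.

Lemma bound_card (a : W) (P : X -> Prop) :
  (forall x, P x -> fst x = None \/ exists g, fst x = Some g /\ ltW g a) -> card_le {x | P x} Kap.
Proof.
  intros HP.
  destruct (constructive_indefinite_description _ (proj1 (proj2 hW) a)) as [si siinj].
  set (oc := fun o : option W => match o with None => None | Some g =>
         match excluded_middle_informative (ltW g a) with
         | left p => Some (si (exist _ g p)) | right _ => None end end).
  apply (cle_trans _ (option Lam * Kap)).
  - exists (fun x => (oc (fst (proj1_sig x)), snd (proj1_sig x))).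
    intros [[o1 k1] H1] [[o2 k2] H2] E. simpl in E. injection E as Eo Ek. subst k2.
    apply sval_inj. simpl. f_equal.
    destruct (HP _ H1) as [E1|[g1 [E1 L1]]]; destruct (HP _ H2) as [E2|[g2 [E2 L2]]];
      simpl in E1, E2; subst o1 o2; auto; unfold oc in Eo.
    + destruct (excluded_middle_informative (ltW g2 a)); [discriminate|contradiction].
    + destruct (excluded_middle_informative (ltW g1 a)); [discriminate|contradiction].
    + destruct (excluded_middle_informative (ltW g1 a)); [|contradiction].
      destruct (excluded_middle_informative (ltW g2 a)); [|contradiction].
      injection Eo as Eo. apply siinj in Eo. injection Eo as ->. reflexivity.
  - apply (cle_trans _ (option Kap * Kap)); [apply prod_le; [apply option_map_le; auto|apply cle_refl]|].
    apply (cle_trans _ (Kap * Kap)); [apply prod_le; [apply optK|apply cle_refl]|apply KK].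
Qed.

Lemma W_nomax : forall g, exists d, ltW g d.
Proof.
  intros g. apply NNPP. intros Hn.
  apply (proj2 (proj2 hW)).
  apply (cle_trans _ (option Lam)); [|apply option_le; auto].
  destruct (constructive_indefinite_description _ (proj1 (proj2 hW) g)) as [si siinj].
  exists (fun d => match excluded_middle_informative (ltW d g) with
                   | left p => Some (si (exist _ d p)) | right _ => None end).
  intros a b E.
  destruct (excluded_middle_informative (ltW a g)) as [pa|pa];
  destruct (excluded_middle_informative (ltW b g)) as [pb|pb]; try discriminate.
  - injection E as E. apply siinj in E. injection E as E. exact E.
  - destruct (totW a g) as [L|[L|L]]; [contradiction| |exfalso; apply Hn; eauto].
    destruct (totW b g) as [L'|[L'|L']]; [contradiction| |exfalso; apply Hn; eauto]. congruence.
Qed.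

Definition Rel (a : W) (prev : forall g, ltW g a -> State) (st : State) : Prop :=
  K_card K Kap (ssub st) /\
  (forall g (p : ltW g a), InclLe (prev g p) st /\ HExt (prev g p) st) /\
  (forall x, sP st x -> fst x = None \/ exists g, fst x = Some g /\ ltW g a) /\
  Core st /\
  (forall g, ltW g a -> T (e g) -> sH st (e g)) /\
  (is_limit ltW a -> forall x, sP st x -> exists g (p : ltW g a), sP (prev g p) x).

Lemma closed_True : closedP tau (fun F (xs : arF tau F -> X) => x0) (fun _ => True).
Proof. intros F xs _; exact I. Qed.

Definition dummy : State :=
  mkS (fun _ => True) (fun F xs => x0) (fun _ _ => False) closed_True (fun _ => False) (fun _ _ => x0).

Definition Fstep (a : W) (prev : forall g, ltW g a -> State) : State :=
  match excluded_middle_informative (exists st, Rel a prev st) with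
  | left H => proj1_sig (constructive_indefinite_description _ H)
  | right _ => dummy end.

Definition Sfix : W -> State := Fix wfW (fun _ => State) Fstep.

Lemma Sfix_eq a : Sfix a = Fstep a (fun g _ => Sfix g).
Proof.
  assert (Hext : forall (x : W) (f g : forall y : W, ltW y x -> State),
    (forall (y : W) (p : ltW y x), f y p = g y p) -> Fstep x f = Fstep x g).
  { intros x f g E. assert (f = g) as ->; [|reflexivity].
    apply functional_extensionality_dep; intros y. apply functional_extensionality_dep; intros p. apply E. }
  exact (@Fix_eq W ltW wfW (fun _ => State) Fstep Hext a).
Qed.

Lemma Rel_exists a : (forall g, ltW g a -> Rel g (fun d _ => Sfix d) (Sfix g)) ->
  exists st, Rel a (fun g _ => Sfix g) st.
Proof.
  intros IH.
  destruct (classic (exists g, ltW g a)) as [Hne|Hne].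
  2:{ destruct base_exists as [st [Kc [Co Col]]]. exists st.
      split; [auto|split; [|split; [|split; [auto|split]]]].
      - intros g p; exfalso; apply Hne; eauto.
      - intros x Hx; left; auto.
      - intros g p; exfalso; apply Hne; eauto.
      - intros [[g p] _]; exfalso; apply Hne; eauto. }
  destruct (classic (is_limit ltW a)) as [Hl|Hl].
  -
    assert (Hk : forall g, ltW g a -> K_card K Kap (ssub (Sfix g))) by (intros g p; apply (IH g p)).
    assert (Hinc : forall g d, ltW d a -> ltW g d -> InclLe (Sfix g) (Sfix d) /\ HExt (Sfix g) (Sfix d)).
    { intros g d pd L. apply (proj1 (proj2 (IH d pd)) g L). }
    assert (Hcont : forall d, ltW d a -> is_limit ltW d -> forall x, sP (Sfix d) x ->
                 exists g, ltW g d /\ sP (Sfix g) x).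
    { intros d pd ld x Hx. destruct (proj2 (proj2 (proj2 (proj2 (proj2 (IH d pd))))) ld x Hx) as [g [p H]].
      eauto. }
    assert (Hcore : forall g, ltW g a -> Core (Sfix g)) by (intros g p; apply (IH g p)).
    assert (Ddown : forall g d, ltW g d -> ltW d a -> ltW g a) by (intros; eapply trW; eauto).
    destruct (join_exists (fun g => ltW g a) Sfix Hne Ddown Hk Hinc Hcont Hcore) as [inKj [Incj Corej]].
    exists (Sj (fun g => ltW g a) Sfix Hne Hinc).
    split; [split; [exact inKj|]|split; [|split; [|split; [exact Corej|split]]]].
    + destruct Hne as [g0 p0]. apply CB.
      * apply (bound_card a). intros x [g [pg Hg]].
        destruct (proj1 (proj2 (proj2 (IH g pg))) x Hg) as [E|[d [E L]]]; [left; auto|right].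
        exists d; split; auto. eapply trW; eauto.
      * apply (cle_trans _ (car (ssub (Sfix g0)))); [apply ceq_ge, (Hk g0 p0)|].
        exists (fun x => exist (Pj (fun g => ltW g a) Sfix) (proj1_sig x) (ex_intro _ g0 (conj p0 (proj2_sig x)))).
        intros x y E. apply sval_inj. exact (f_equal (@proj1_sig _ _) E).
    + intros g p. apply Incj. exact p.
    + intros x [g [pg Hg]].
      destruct (proj1 (proj2 (proj2 (IH g pg))) x Hg) as [E|[d [E L]]]; [left; auto|right].
      exists d; split; auto. eapply trW; eauto.
    + intros g p Tg. destruct Hl as [_ Hl]. destruct (Hl g p) as [k [L1 L2]].
      destruct (IH k L2) as [_ [_ [_ [_ [H5 _]]]]]. exists k. split; auto.
    + intros _ x [g [pg Hg]]. exists g, pg. exact Hg.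
  -
    assert (Hmax : exists b, ltW b a /\ forall g, ltW g a -> g = b \/ ltW g b).
    { apply NNPP. intros Hn. apply Hl. split; auto. intros g p. apply NNPP. intros Hk.
      apply Hn. exists g. split; auto. intros d pd. destruct (totW d g) as [L|[L|L]]; auto.
      exfalso; apply Hk; eauto. }
    destruct Hmax as [b [pb Hb]].
    assert (notlim : ~ is_limit ltW a).
    { intros [_ Hl']. destruct (Hl' b pb) as [k [L1 L2]]. destruct (Hb k L2) as [->|L].
      - exact (irrW _ L1). - exact (asymW _ _ L1 L). }
    destruct (IH b pb) as [K0 [Inc0 [Col0 [Core0 [E0 _]]]]].
    assert (Hcolb : forall x, sP (Sfix b) x -> fst x <> Some b).
    { intros x Hx E. destruct (Col0 x Hx) as [E'|[g [E' L]]]; rewrite E in E'; [discriminate|].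
      injection E' as ->. exact (irrW _ L). }
    destruct (classic (T (e b) /\ ~ sH (Sfix b) (e b))) as [[Te Hn]|Hn].
    + destruct (step_exists (Sfix b) b (e b) K0 Core0 Hcolb Te Hn)
        as [st [Kc [Inc [Hx [Co [He Col]]]]]].
      exists st. split; [auto|split; [|split; [|split; [auto|split]]]].
      * intros g p. destruct (Hb g p) as [->|L]; [auto|].
        destruct (Inc0 g L) as [I1 H1]. split; [eapply InclLe_trans; eauto|eapply HExt_trans; eauto].
      * intros x Hx'. destruct (Col x Hx') as [H|H].
        -- destruct (Col0 x H) as [E|[g [E L]]]; [left; auto|right; exists g; split; auto; eapply trW; eauto].
        -- right; exists b; auto.
      * intros g p Tg. destruct (Hb g p) as [->|L]; [auto|]. apply Hx. apply E0; auto.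
      * intros Hl'; contradiction.
    + exists (Sfix b). split; [auto|split; [|split; [|split; [auto|split]]]].
      * intros g p. destruct (Hb g p) as [->|L]; [|apply Inc0; auto].
        split; [apply InclLe_refl; apply K0|apply HExt_refl].
      * intros x Hx'. destruct (Col0 x Hx') as [E|[g [E L]]]; [left; auto|right; exists g; split; auto; eapply trW; eauto].
      * intros g p Tg. destruct (Hb g p) as [->|L]; [|apply E0; auto].
        apply NNPP. intros Hn'. apply Hn; auto.
      * intros Hl'; contradiction.
Qed.

Lemma Sfix_Rel : forall a, Rel a (fun g _ => Sfix g) (Sfix a).
Proof.
  intros a. induction a as [a IH] using (well_founded_ind wfW).
  destruct (Rel_exists a IH) as [st Hst].
  rewrite Sfix_eq. unfold Fstep.
  destruct (excluded_middle_informative _) as [H|H].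
  - exact (proj2_sig (constructive_indefinite_description _ H)).
  - exfalso; apply H; eauto.
Qed.

Lemma final : exists (Ms : structure tau) (g : forall eta, car (M eta) -> car Ms),
    inK K Ms /\
    (forall eta, T eta -> leK K (M eta) Ms (g eta)) /\
    (forall eta nu, T eta -> T nu -> initseg eta nu -> forall x, g nu (h eta nu x) = g eta x) /\
    card_le (car Ms) (Kap * W).
Proof.
  assert (Dne : exists g : W, True) by exact W_ne.
  assert (Ddown : forall g d : W, ltW g d -> True -> True) by auto.
  assert (Hk : forall g, True -> K_card K Kap (ssub (Sfix g))) by (intros g _; apply (Sfix_Rel g)).
  assert (Hinc : forall g d, True -> ltW g d -> InclLe (Sfix g) (Sfix d) /\ HExt (Sfix g) (Sfix d)).
  { intros g d _ L. apply (proj1 (proj2 (Sfix_Rel d)) g L). }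
  assert (Hcont : forall d, True -> is_limit ltW d -> forall x, sP (Sfix d) x ->
                 exists g, ltW g d /\ sP (Sfix g) x).
  { intros d _ ld x Hx. destruct (proj2 (proj2 (proj2 (proj2 (proj2 (Sfix_Rel d))))) ld x Hx) as [g [p H]].
    eauto. }
  assert (Hcore : forall g, True -> Core (Sfix g)) by (intros g _; apply (Sfix_Rel g)).
  destruct (join_exists (fun _ => True) Sfix Dne Ddown Hk Hinc Hcont Hcore) as [inKj [Incj Corej]].
  set (st := Sj (fun _ => True) Sfix Dne Hinc).
  destruct Corej as [Hr [HT' [Hd [HL Hc]]]].
  assert (inhMs : inhabited (car (ssub st))).
  { destruct (HL root0 Hr) as [g' _]. destruct (M_inh root0 Troot) as [x]. exact (inhabits (g' x)). }
  set (g := fun eta (x : car (M eta)) => epsilon inhMs (fun z => proj1_sig z = sG st eta x)).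
  assert (HT : forall eta, T eta -> sH st eta).
  { intros eta Te. destruct (e_surj eta Te) as [a <-]. destruct (W_nomax a) as [d L].
    destruct (Sfix_Rel d) as [_ [_ [_ [_ [H5 _]]]]]. exists d. split; auto. }
  assert (gv : forall eta x, T eta -> proj1_sig (g eta x) = sG st eta x).
  { intros eta x Te. destruct (HL eta (HT eta Te)) as [g' [_ V]].
    apply (epsilon_spec inhMs (fun z => proj1_sig z = sG st eta x)). exists (g' x); auto. }
  exists (ssub st), g. split; [exact inKj|split; [|split]].
  - intros eta Te. destruct (HL eta (HT eta Te)) as [g' [Lg V]].
    apply (leK_ext tau K _ _ g'); auto. intros x. apply sval_inj. rewrite V, gv; auto.
  - intros eta nu Te Tn J x. apply sval_inj. rewrite !gv; auto.
  - apply (cle_trans _ X).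
    + exists (fun x => proj1_sig x). intros a b; apply sval_inj.
    + apply (cle_trans _ (W * Kap)).
      * apply prod_le; [apply option_le, Winf|apply cle_refl].
      * exists (fun p => (snd p, fst p)). intros [a b] [c d] E. injection E as -> ->. reflexivity.
Qed.

End Main.

Theorem claim2p16 (tau : vocab) (K : AEC tau) (Lam Kap W : Type)
  (ltW : W -> W -> Prop)
  (hLinf : infinite_type Lam) (hKinf : infinite_type Kap) (hLK : card_le Lam Kap)
  (hW : is_succ_card_ordinal Lam ltW)
  (hLS : LS_property (inK K) (leK K) Kap) (hAP : amalgamation K Kap)
  (T : wseq ltW -> Prop) (hT : is_subtree T) (hTne : exists eta, T eta)
  (hlev : levels_le T)
  (M : wseq ltW -> structure tau)
  (h : forall eta nu : wseq ltW, car (M eta) -> car (M nu))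
  (hM : forall eta, T eta -> inK K (M eta) /\ card_eq (car (M eta)) Kap)
  (hh : forall eta nu, T eta -> T nu -> initseg eta nu -> leK K (M eta) (M nu) (h eta nu))
  (hid : forall eta, T eta -> forall x, h eta eta x = x)
  (hcomp : forall eta nu rho, T eta -> T nu -> T rho -> initseg eta nu -> initseg nu rho ->
             forall x, h nu rho (h eta nu x) = h eta rho x) :
  exists (Ms : structure tau) (g : forall eta, car (M eta) -> car Ms),
    inK K Ms /\
    (forall eta, T eta -> leK K (M eta) Ms (g eta)) /\
    (forall eta nu, T eta -> T nu -> initseg eta nu -> forall x, g nu (h eta nu x) = g eta x) /\
    card_le (car Ms) (Kap * W).
Proof.
  exact (final tau K Lam Kap W ltW hLinf hKinf hLK hW hAP T hT hTne hlev M h hM hh hid hcomp).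
Qed.
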